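(* In the Euclidean plane or space, let ${\rm O},{\rm A},{\rm B}$ be three distinct points such that ${\rm A}$ and ${\rm B}$ lie on a same ray from ${\rm O}$. For every $T>0$ there is a unique direct Keplerian arc around ${\rm O}$ going from ${\rm A}$ to ${\rm B}$ with elapsed time $T$, and this arc is rectilinear.
   Context: Units are normalized so that the Kepler problem with fixed center ${\rm O}$ is $\ddot q=-q/|q|^3$. A Keplerian arc around ${\rm O}$ from ${\rm A}$ to ${\rm B}$ is a solution restricted to a compact time interval $[t_{\rm A},t_{\rm B}]$, $t_{\rm A}<t_{\rm B}$, with $q(t_{\rm A})={\rm A}$, $q(t_{\rm B})={\rm B}$; elapsed time $t_{\rm B}-t_{\rm A}$. Rectilinear motions are extended after collision with ${\rm O}$ (bounce back along the same ray with the same energy). An arc is indirect if its convex hull contains ${\rm O}$, direct otherwise. *)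

(* Defs.v *)
From Stdlib Require Import Reals Lra.
Open Scope R_scope.

(* Points of the Euclidean space R^d are encoded as functions nat -> R whose
   coordinates of index >= d vanish. *)
Definition pt := nat -> R.

Definition inR (d : nat) (x : pt) : Prop := forall i, (d <= i)%nat -> x i = 0.

Fixpoint sumR (n : nat) (f : nat -> R) : R :=
  match n with
  | O => 0
  | S m => sumR m f + f m
  end.

Definition dot (d : nat) (x y : pt) : R := sumR d (fun i => x i * y i).
Definition norm (d : nat) (x : pt) : R := sqrt (dot d x x).
Definition vsub (x y : pt) : pt := fun i => x i - y i.

Definition eqpt (d : nat) (x y : pt) : Prop := forall i, (i < d)%nat -> x i = y i.

(* Keplerian arc around the center O, from time tA to time tB: the restriction
   to [tA,tB] of a (generalized) solution of  q'' = -(q-O)/|q-O|^3  defined on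
   an open interval (a,b) containing [tA,tB].  Away from collisions it is a
   classical C^2 solution (v is the velocity); collision times are isolated, the
   energy |v|^2/2 - 1/|q-O| is the same at all non-collision times, and if a
   collision occurs the whole motion stays on a single ray from O
   (rectilinear motion bouncing back along the same ray with the same energy). *)
Definition KeplerArc (d : nat) (O : pt) (q : R -> pt) (tA tB : R) : Prop :=
  tA < tB /\
  (forall t, inR d (q t)) /\
  exists (a b : R) (v : R -> pt) (h : R),
    a < tA /\ tB < b /\
    (forall t, a < t < b -> forall i, (i < d)%nat ->
        continuity_pt (fun s => q s i) t) /\
    (forall t, a < t < b -> 0 < norm d (vsub (q t) O) ->
       forall i, (i < d)%nat ->
         derivable_pt_lim (fun s => q s i) t (v t i) /\
         derivable_pt_lim (fun s => v s i) t
           (- (q t i - O i) / (norm d (vsub (q t) O)) ^ 3)) /\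
    (forall t, a < t < b -> 0 < norm d (vsub (q t) O) ->
       dot d (v t) (v t) / 2 - 1 / norm d (vsub (q t) O) = h) /\
    (forall t0, a < t0 < b -> norm d (vsub (q t0) O) = 0 ->
       exists eps, 0 < eps /\
         forall t, 0 < Rabs (t - t0) < eps -> 0 < norm d (vsub (q t) O)) /\
    ((exists t0, a < t0 < b /\ norm d (vsub (q t0) O) = 0) ->
       exists u : pt, inR d u /\ norm d u = 1 /\
         forall t, a < t < b -> exists lam, 0 <= lam /\
           forall i, (i < d)%nat -> q t i = O i + lam * u i).

Definition InArcHull (d : nat) (q : R -> pt) (tA tB : R) (x : pt) : Prop :=
  exists (n : nat) (w : nat -> R) (ts : nat -> R),
    (forall k, (k < n)%nat -> 0 <= w k /\ tA <= ts k <= tB) /\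
    sumR n w = 1 /\
    forall i, (i < d)%nat -> sumR n (fun k => w k * q (ts k) i) = x i.

Definition DirectArc (d : nat) (O : pt) (q : R -> pt) (tA tB : R) : Prop :=
  ~ InArcHull d q tA tB O.

Definition Rectilinear (d : nat) (O : pt) (q : R -> pt) (tA tB : R) : Prop :=
  exists u : pt, inR d u /\ 0 < norm d u /\
    forall t, tA <= t <= tB -> exists lam : R,
      forall i, (i < d)%nat -> q t i = O i + lam * u i.

Definition ArcFromTo (d : nat) (O A B : pt) (q : R -> pt) (tA T : R) : Prop :=
  KeplerArc d O q tA (tA + T) /\ eqpt d (q tA) A /\ eqpt d (q (tA + T)) B.

(* Main.v *)
Require Import Defs.
From Stdlib Require Import Reals Lra Lia Ranalysis5 ClassicalEpsilon FunctionalExtensionality.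
Open Scope R_scope.

Lemma d23_ge2 d : (d = 2 \/ d = 3)%nat -> (2 <= d)%nat.
Proof. lia. Qed.

Lemma inR_3 d x : (d = 2 \/ d = 3)%nat -> inR d x -> forall i, (3 <= i)%nat -> x i = 0.
Proof. intros Hd H i Hi; apply H; lia. Qed.

Lemma inR_2 x : inR 2 x -> x 2%nat = 0.
Proof. intros H; apply H; lia. Qed.

Lemma dot3 d x y : (d = 2 \/ d = 3)%nat -> inR d x ->
  dot d x y = x 0%nat * y 0%nat + x 1%nat * y 1%nat + x 2%nat * y 2%nat.
Proof.
  intros [-> | ->] H; unfold dot; simpl.
  - rewrite (inR_2 x H); ring.
  - ring.
Qed.

Lemma inR_vsub d x y : inR d x -> inR d y -> inR d (vsub x y).
Proof. intros Hx Hy i Hi; unfold vsub; rewrite Hx, Hy; auto; ring. Qed.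

Definition sq3 (a b c : R) := a*a + b*b + c*c.

Lemma sq3_nonneg a b c : 0 <= sq3 a b c.
Proof. unfold sq3; nra. Qed.

Lemma norm3 d x : (d = 2 \/ d = 3)%nat -> inR d x ->
  norm d x = sqrt (sq3 (x 0%nat) (x 1%nat) (x 2%nat)).
Proof. intros Hd H; unfold norm; rewrite (dot3 d x x Hd H); reflexivity. Qed.

Lemma sq3_zero a b c : sq3 a b c = 0 -> a = 0 /\ b = 0 /\ c = 0.
Proof. unfold sq3; intros; repeat split; nra. Qed.

Lemma sqrt_pos_sq3 a b c : 0 < sqrt (sq3 a b c) -> 0 < sq3 a b c.
Proof.
  intros H. destruct (sq3_nonneg a b c) as [H'|H']; auto.
  rewrite <- H', sqrt_0 in H; lra.
Qed.

Lemma lt_d_cases d i : (d = 2 \/ d = 3)%nat -> (i < d)%nat -> (i = 0 \/ i = 1 \/ i = 2)%nat.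
Proof. lia. Qed.

Lemma const_on (f : R -> R) a b :
  (forall c, a <= c <= b -> derivable_pt_lim f c 0) ->
  forall x, a <= x <= b -> f x = f a.
Proof.
  intros Hd x Hx. destruct (Req_dec x a) as [->|Hne]; auto.
  assert (Hax : a < x) by lra.
  destruct (MVT_cor2 f (fun _ => 0) a x Hax) as [c [Hc _]].
  - intros c Hc; apply Hd; lra.
  - lra.
Qed.

Lemma incr_on (f f' : R -> R) a b :
  (forall c, a <= c <= b -> derivable_pt_lim f c (f' c)) ->
  (forall c, a <= c <= b -> 0 < f' c) ->
  forall x y, a <= x -> x < y -> y <= b -> f x < f y.
Proof.
  intros Hd Hp x y H1 H2 H3.
  destruct (MVT_cor2 f f' x y H2) as [c [Hc Hc']].
  - intros c Hc; apply Hd; lra.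
  - assert (0 < f' c) by (apply Hp; lra). nra.
Qed.

Lemma deriv_interior_max (g : R -> R) m l a b :
  a < m < b -> derivable_pt_lim g m l ->
  (forall x, a < x < b -> g x <= g m) -> l = 0.
Proof.
  intros Hm Hd Hmax.
  destruct (Rtotal_order l 0) as [Hl|[Hl|Hl]]; auto; exfalso.
  - destruct (Hd (- l / 2)) as [del Hdel]; [lra|].
    set (h := - Rmin (del / 2) ((m - a) / 2)).
    assert (Hh1 : 0 < Rmin (del / 2) ((m - a) / 2)) by (apply Rmin_pos; destruct del; simpl; lra).
    assert (Hh2 : Rmin (del / 2) ((m - a) / 2) <= del / 2) by apply Rmin_l.
    assert (Hh3 : Rmin (del / 2) ((m - a) / 2) <= (m - a) / 2) by apply Rmin_r.
    assert (H0 : h <> 0) by (unfold h; lra).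
    assert (H1 : Rabs h < del) by (unfold h; rewrite Rabs_Ropp, Rabs_pos_eq; destruct del; simpl in *; lra).
    specialize (Hdel h H0 H1).
    assert (Hle : g (m + h) <= g m) by (apply Hmax; unfold h; lra).
    apply Rabs_def2 in Hdel. destruct Hdel as [Hd1 Hd2].
    assert (Hq : (g (m + h) - g m) / h >= 0).
    { unfold Rdiv. assert (h < 0) by (unfold h; lra).
      assert (/ h < 0) by (apply Rinv_lt_0_compat; lra). nra. }
    lra.
  - destruct (Hd (l / 2)) as [del Hdel]; [lra|].
    set (h := Rmin (del / 2) ((b - m) / 2)).
    assert (Hh1 : 0 < h) by (apply Rmin_pos; destruct del; simpl; lra).
    assert (Hh2 : h <= del / 2) by apply Rmin_l.
    assert (Hh3 : h <= (b - m) / 2) by apply Rmin_r.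
    assert (H0 : h <> 0) by lra.
    assert (H1 : Rabs h < del) by (rewrite Rabs_pos_eq; destruct del; simpl in *; lra).
    specialize (Hdel h H0 H1).
    assert (Hle : g (m + h) <= g m) by (apply Hmax; lra).
    apply Rabs_def2 in Hdel. destruct Hdel as [Hd1 Hd2].
    assert (Hq : (g (m + h) - g m) / h <= 0).
    { unfold Rdiv. assert (/ h > 0) by (apply Rinv_0_lt_compat; lra). nra. }
    lra.
Qed.

Lemma pos_deriv_right (G : R -> R) m l :
  derivable_pt_lim G m l -> 0 < l -> G m = 0 ->
  exists del, 0 < del /\ forall h, 0 < h < del -> 0 < G (m + h).
Proof.
  intros Hd Hl H0.
  destruct (Hd l Hl) as [del Hdel]. exists del. split; [destruct del; simpl; lra|].
  intros h Hh. assert (h <> 0) by lra.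
  assert (Rabs h < del) by (rewrite Rabs_pos_eq; lra).
  specialize (Hdel h H H1). rewrite H0, Rminus_0_r in Hdel.
  apply Rabs_def2 in Hdel. destruct Hdel as [_ Hd2].
  assert (0 < G (m + h) / h) by lra.
  assert (G (m + h) = G (m + h) / h * h) by (field; lra). rewrite H3. nra.
Qed.

Lemma derivable_cont (f : R -> R) x l : derivable_pt_lim f x l -> continuity_pt f x.
Proof. intros H. apply derivable_continuous_pt. exists l. exact H. Qed.

Lemma max_principle (r1 r2 w1 w2 : R -> R) T :
  0 < T ->
  (forall s, 0 <= s <= T -> 0 < r1 s /\ derivable_pt_lim r1 s (w1 s) /\
        derivable_pt_lim w1 s (- / (r1 s)^2)) ->
  (forall s, 0 <= s <= T -> 0 < r2 s /\ derivable_pt_lim r2 s (w2 s) /\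
        derivable_pt_lim w2 s (- / (r2 s)^2)) ->
  r1 0 = r2 0 -> r1 T = r2 T ->
  forall s, 0 <= s <= T -> r2 s <= r1 s.
Proof.
  intros HT H1 H2 E0 ET s0 Hs0.
  destruct (Rle_or_lt (r2 s0) (r1 s0)) as [|Hlt]; auto. exfalso.
  set (g := fun s => r2 s - r1 s).
  assert (Hgd : forall s, 0 <= s <= T -> derivable_pt_lim g s (w2 s - w1 s)).
  { intros s Hs. apply derivable_pt_lim_minus; [apply H2|apply H1]; auto. }
  destruct (continuity_ab_maj g 0 T) as [m [Hm Hmr]]; [lra| |].
  { intros c Hc. exact (derivable_cont _ _ _ (Hgd c Hc)). }
  assert (Hgm : g s0 <= g m) by (apply Hm; auto).
  unfold g in Hgm.
  assert (Hm0 : m <> 0) by (intros ->; lra).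
  assert (HmT : m <> T) by (intros ->; lra).
  assert (Hmi : 0 < m < T) by lra.
  assert (Hder0 : w2 m - w1 m = 0).
  { apply (deriv_interior_max g m _ 0 T); auto. intros x Hx; apply Hm; lra. }
  set (G := fun s => w2 s - w1 s).
  destruct (H1 m ltac:(lra)) as [Hr1 [_ Hw1]].
  destruct (H2 m ltac:(lra)) as [Hr2 [_ Hw2]].
  assert (HGd : derivable_pt_lim G m (- / (r2 m)^2 - - / (r1 m)^2))
    by (apply derivable_pt_lim_minus; auto).
  assert (Hpos : 0 < - / (r2 m)^2 - - / (r1 m)^2).
  { assert (r1 m < r2 m) by lra.
    assert (/ (r2 m)^2 < / (r1 m)^2).
    { apply Rinv_lt_contravar. apply Rmult_lt_0_compat; apply pow_lt; lra.
      simpl; rewrite !Rmult_1_r; nra. }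
    lra. }
  destruct (pos_deriv_right G m _ HGd Hpos Hder0) as [del [Hdel HG]].
  set (h := Rmin (del / 2) (T - m)).
  assert (Hh : 0 < h) by (apply Rmin_pos; lra).
  assert (Hh1 : h <= del / 2) by apply Rmin_l.
  assert (Hh2 : h <= T - m) by apply Rmin_r.
  destruct (MVT_cor2 g G m (m + h)) as [c [Hc Hc']]; [lra| |].
  { intros c Hc. apply Hgd. lra. }
  assert (HGc : 0 < G c).
  { replace c with (m + (c - m)) by ring. apply HG. lra. }
  assert (g (m + h) <= g m) by (apply Hm; lra).
  nra.
Qed.

Lemma pos_deriv_left (G : R -> R) m l :
  derivable_pt_lim G m l -> 0 < l -> G m = 0 ->
  exists del, 0 < del /\ forall h, 0 < h < del -> G (m - h) < 0.
Proof.
  intros Hd Hl H0.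
  destruct (Hd l Hl) as [del Hdel]. exists del. split; [destruct del; simpl; lra|].
  intros h Hh. assert (-h <> 0) by lra.
  assert (Rabs (-h) < del) by (rewrite Rabs_Ropp, Rabs_pos_eq; lra).
  specialize (Hdel (-h) H H1). rewrite H0, Rminus_0_r in Hdel.
  apply Rabs_def2 in Hdel. destruct Hdel as [_ Hd2].
  assert (0 < G (m + - h) / - h) by lra.
  assert (G (m + - h) = - (G (m + - h) / - h * h)) by (field; lra).
  replace (m - h) with (m + - h) by ring. rewrite H3. nra.
Qed.

Lemma last_zero (f f' : R -> R) p m :
  p < m -> (forall t, p <= t <= m -> derivable_pt_lim f t (f' t)) ->
  0 < f p -> f m < 0 ->
  exists t, p < t < m /\ f t = 0 /\ f' t <= 0.
Proof.
  intros Hpm Hd Hp Hm.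
  set (E := fun t => p <= t <= m /\ 0 <= f t).
  assert (Hb : bound E) by (exists m; intros t [Ht _]; lra).
  assert (He : exists t, E t) by (exists p; split; lra).
  destruct (completeness E Hb He) as [ts [Hub Hlub]].
  assert (Hpts : p <= ts) by (apply Hub; split; lra).
  assert (Htsm : ts <= m) by (apply Hlub; intros t [Ht _]; lra).
  assert (Hcont : forall t, p <= t <= m -> continuity_pt f t)
    by (intros t Ht; eapply derivable_cont; eauto).
  assert (Hge : 0 <= f ts).
  { destruct (Rle_or_lt 0 (f ts)) as [|Hlt]; auto. exfalso.
    destruct (Hcont ts ltac:(lra) (- f ts) ltac:(lra)) as [del [Hdel Hc]].
    assert (Hub2 : is_upper_bound E (ts - del / 2)).
    { intros t [Ht Hft]. destruct (Rle_or_lt t (ts - del/2)) as [|Hgt]; auto.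
      exfalso. assert (t <= ts) by (apply Hub; split; auto).
      destruct (Req_dec t ts) as [->|Hne]; [lra|].
      assert (Hd' : D_x no_cond ts t /\ R_dist t ts < del).
      { split. split; [exact I| auto]. unfold R_dist. rewrite Rabs_left; lra. }
      specialize (Hc t Hd'). unfold R_dist in Hc. apply Rabs_def2 in Hc. lra. }
    specialize (Hlub _ Hub2). lra. }
  assert (Hts_lt : ts < m) by (destruct (Req_dec ts m) as [->|]; lra).
  assert (Hneg : forall t, ts < t <= m -> f t < 0).
  { intros t Ht. destruct (Rle_or_lt 0 (f t)) as [H|H]; auto.
    assert (t <= ts) by (apply Hub; split; [lra|auto]). lra. }
  assert (Heq : f ts = 0).
  { destruct Hge as [Hgt|]; auto. exfalso.
    destruct (Hcont ts ltac:(lra) (f ts) Hgt) as [del [Hdel Hc]].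
    set (t := ts + Rmin (del / 2) ((m - ts) / 2)).
    assert (0 < Rmin (del / 2) ((m - ts) / 2)) by (apply Rmin_pos; lra).
    assert (Rmin (del / 2) ((m - ts) / 2) <= del / 2) by apply Rmin_l.
    assert (Rmin (del / 2) ((m - ts) / 2) <= (m - ts) / 2) by apply Rmin_r.
    assert (Hd' : D_x no_cond ts t /\ R_dist t ts < del).
    { split. split; [exact I| unfold t; lra]. unfold R_dist, t.
      rewrite Rabs_pos_eq; lra. }
    specialize (Hc t Hd'). unfold R_dist in Hc. apply Rabs_def2 in Hc.
    assert (f t < 0) by (apply Hneg; unfold t; lra). lra. }
  exists ts. split; [|split; auto].
  - split; auto. destruct (Req_dec p ts) as [<-|]; lra.
  - destruct (Rle_or_lt (f' ts) 0) as [|Hpos]; auto. exfalso.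
    destruct (pos_deriv_right f ts (f' ts) (Hd ts ltac:(lra)) Hpos Heq) as [del [Hdel Hr]].
    set (h := Rmin (del / 2) (m - ts)).
    assert (0 < h) by (apply Rmin_pos; lra).
    assert (h <= del / 2) by apply Rmin_l.
    assert (h <= m - ts) by apply Rmin_r.
    assert (0 < f (ts + h)) by (apply Hr; lra).
    assert (f (ts + h) < 0) by (apply Hneg; lra). lra.
Qed.

Lemma dl_mult (f g : R -> R) x f' g' : derivable_pt_lim f x f' -> derivable_pt_lim g x g' ->
  derivable_pt_lim (fun t => f t * g t) x (f' * g x + f x * g').
Proof. intros; apply (derivable_pt_lim_mult f g); auto. Qed.
Lemma dl_plus (f g : R -> R) x f' g' : derivable_pt_lim f x f' -> derivable_pt_lim g x g' ->
  derivable_pt_lim (fun t => f t + g t) x (f' + g').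
Proof. intros; apply (derivable_pt_lim_plus f g); auto. Qed.
Lemma dl_minus (f g : R -> R) x f' g' : derivable_pt_lim f x f' -> derivable_pt_lim g x g' ->
  derivable_pt_lim (fun t => f t - g t) x (f' - g').
Proof. intros; apply (derivable_pt_lim_minus f g); auto. Qed.
Lemma dl_const c x : derivable_pt_lim (fun _ => c) x 0.
Proof. apply derivable_pt_lim_const. Qed.
Lemma dl_eq0 (f : R -> R) x l l' : derivable_pt_lim f x l -> l = l' -> derivable_pt_lim f x l'.
Proof. intros H ->; auto. Qed.
Lemma dl_scal c (f : R -> R) x f' : derivable_pt_lim f x f' ->
  derivable_pt_lim (fun t => c * f t) x (c * f').
Proof. intros; apply (derivable_pt_lim_scal f); auto. Qed.
Lemma dl_mulc (f : R -> R) c x f' : derivable_pt_lim f x f' ->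
  derivable_pt_lim (fun t => f t * c) x (f' * c).
Proof. intros H. eapply dl_eq0. apply (dl_mult f (fun _ => c)); eauto using dl_const. ring. Qed.
Lemma dl_eq (f : R -> R) x l l' : derivable_pt_lim f x l -> l = l' -> derivable_pt_lim f x l'.
Proof. intros H ->; auto. Qed.

Section V3.
Variables x0 x1 x2 v0 v1 v2 : R -> R.

Definition N3 t := sqrt (sq3 (x0 t) (x1 t) (x2 t)).

Definition ODE3 t :=
  0 < N3 t /\
  derivable_pt_lim x0 t (v0 t) /\ derivable_pt_lim x1 t (v1 t) /\ derivable_pt_lim x2 t (v2 t) /\
  derivable_pt_lim v0 t (- x0 t / N3 t ^ 3) /\ derivable_pt_lim v1 t (- x1 t / N3 t ^ 3) /\
  derivable_pt_lim v2 t (- x2 t / N3 t ^ 3).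

Definition L0 t := x1 t * v2 t - x2 t * v1 t.
Definition L1 t := x2 t * v0 t - x0 t * v2 t.
Definition L2 t := x0 t * v1 t - x1 t * v0 t.

Lemma L0_d t : ODE3 t -> derivable_pt_lim L0 t 0.
Proof.
  intros (HN & d0 & d1 & d2 & e0 & e1 & e2). unfold L0.
  eapply dl_eq. apply dl_minus; apply dl_mult; eauto.
  field. lra.
Qed.
Lemma L1_d t : ODE3 t -> derivable_pt_lim L1 t 0.
Proof.
  intros (HN & d0 & d1 & d2 & e0 & e1 & e2). unfold L1.
  eapply dl_eq. apply dl_minus; apply dl_mult; eauto.
  field. lra.
Qed.
Lemma L2_d t : ODE3 t -> derivable_pt_lim L2 t 0.
Proof.
  intros (HN & d0 & d1 & d2 & e0 & e1 & e2). unfold L2.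
  eapply dl_eq. apply dl_minus; apply dl_mult; eauto.
  field. lra.
Qed.

Lemma ODE3_cont0 t : ODE3 t -> continuity_pt x0 t.
Proof. intros (_ & d0 & _); eapply derivable_cont; eauto. Qed.

Lemma lin_d k0 k1 k2 t : ODE3 t ->
  derivable_pt_lim (fun s => x0 s * k0 + x1 s * k1 + x2 s * k2) t (v0 t * k0 + v1 t * k1 + v2 t * k2).
Proof.
  intros (HN & d0 & d1 & d2 & e0 & e1 & e2).
  eapply dl_eq. apply dl_plus; [apply dl_plus|]; apply dl_mulc; eauto.
  ring.
Qed.

Lemma linv_d k0 k1 k2 t : ODE3 t ->
  derivable_pt_lim (fun s => v0 s * k0 + v1 s * k1 + v2 s * k2) t
     (- (x0 t * k0 + x1 t * k1 + x2 t * k2) / N3 t ^ 3).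
Proof.
  intros (HN & d0 & d1 & d2 & e0 & e1 & e2).
  eapply dl_eq. apply dl_plus; [apply dl_plus|]; apply dl_mulc; eauto.
  field. lra.
Qed.

Lemma N3_d t : ODE3 t ->
  derivable_pt_lim N3 t ((x0 t * v0 t + x1 t * v1 t + x2 t * v2 t) / N3 t).
Proof.
  intros (HN & d0 & d1 & d2 & e0 & e1 & e2).
  unfold N3 in *.
  assert (HS : 0 < sq3 (x0 t) (x1 t) (x2 t)) by (apply sqrt_pos_sq3; auto).
  pose proof (derivable_pt_lim_sqrt _ HS) as Hs.
  assert (Hq : derivable_pt_lim (fun s => sq3 (x0 s) (x1 s) (x2 s)) t
            (2 * (x0 t * v0 t + x1 t * v1 t + x2 t * v2 t))).
  { unfold sq3. eapply dl_eq. apply dl_plus; [apply dl_plus|]; apply dl_mult; eauto. ring. }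
  pose proof (derivable_pt_lim_comp (fun s => sq3 (x0 s) (x1 s) (x2 s)) sqrt t _ _ Hq Hs) as Hc.
  unfold comp in Hc. eapply dl_eq. exact Hc. field. lra.
Qed.

Lemma dir0_d t : ODE3 t ->
  derivable_pt_lim (fun s => x0 s / N3 s) t ((L1 t * x2 t - L2 t * x1 t) / N3 t ^ 3).
Proof.
  intros H. pose proof (N3_d t H) as HNd.
  destruct H as (HN & d0 & d1 & d2 & e0 & e1 & e2).
  assert (Hsq : N3 t * N3 t = sq3 (x0 t) (x1 t) (x2 t)).
  { unfold N3. apply sqrt_sqrt. apply sq3_nonneg. }
  eapply dl_eq. apply (derivable_pt_lim_div x0 N3); [exact d0|exact HNd|lra].
  transitivity ((v0 t * (N3 t * N3 t) - (x0 t * v0 t + x1 t * v1 t + x2 t * v2 t) * x0 t) / N3 t ^ 3).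
  { unfold Rsqr. field. lra. }
  rewrite Hsq. unfold L1, L2, sq3. field. lra.
Qed.

Lemma dir1_d t : ODE3 t ->
  derivable_pt_lim (fun s => x1 s / N3 s) t ((L2 t * x0 t - L0 t * x2 t) / N3 t ^ 3).
Proof.
  intros H. pose proof (N3_d t H) as HNd.
  destruct H as (HN & d0 & d1 & d2 & e0 & e1 & e2).
  assert (Hsq : N3 t * N3 t = sq3 (x0 t) (x1 t) (x2 t)).
  { unfold N3. apply sqrt_sqrt. apply sq3_nonneg. }
  eapply dl_eq. apply (derivable_pt_lim_div x1 N3); [exact d1|exact HNd|lra].
  transitivity ((v1 t * (N3 t * N3 t) - (x0 t * v0 t + x1 t * v1 t + x2 t * v2 t) * x1 t) / N3 t ^ 3).
  { unfold Rsqr. field. lra. }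
  rewrite Hsq. unfold L0, L2, sq3. field. lra.
Qed.

Lemma dir2_d t : ODE3 t ->
  derivable_pt_lim (fun s => x2 s / N3 s) t ((L0 t * x1 t - L1 t * x0 t) / N3 t ^ 3).
Proof.
  intros H. pose proof (N3_d t H) as HNd.
  destruct H as (HN & d0 & d1 & d2 & e0 & e1 & e2).
  assert (Hsq : N3 t * N3 t = sq3 (x0 t) (x1 t) (x2 t)).
  { unfold N3. apply sqrt_sqrt. apply sq3_nonneg. }
  eapply dl_eq. apply (derivable_pt_lim_div x2 N3); [exact d2|exact HNd|lra].
  transitivity ((v2 t * (N3 t * N3 t) - (x0 t * v0 t + x1 t * v1 t + x2 t * v2 t) * x2 t) / N3 t ^ 3).
  { unfold Rsqr. field. lra. }
  rewrite Hsq. unfold L0, L1, sq3. field. lra.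
Qed.

Lemma radial3 t1 te s :
  t1 < te -> (forall t, t1 <= t <= te -> ODE3 t) -> 0 < s ->
  x0 te = s * x0 t1 -> x1 te = s * x1 t1 -> x2 te = s * x2 t1 ->
  (forall t lam, t1 <= t <= te -> lam < 0 ->
     x0 t = lam * x0 t1 -> x1 t = lam * x1 t1 -> x2 t = lam * x2 t1 -> False) ->
  forall t, t1 <= t <= te ->
    x0 t = N3 t / N3 t1 * x0 t1 /\ x1 t = N3 t / N3 t1 * x1 t1 /\ x2 t = N3 t / N3 t1 * x2 t1.
Proof.
  intros Hte Hode Hs E0 E1 E2 Hneg.
  set (c0 := x0 t1). set (c1 := x1 t1). set (c2 := x2 t1).
  set (l0 := L0 t1). set (l1 := L1 t1). set (l2 := L2 t1).
  assert (HL0 : forall t, t1 <= t <= te -> L0 t = l0)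
    by (apply const_on; intros; apply L0_d, Hode; auto).
  assert (HL1 : forall t, t1 <= t <= te -> L1 t = l1)
    by (apply const_on; intros; apply L1_d, Hode; auto).
  assert (HL2 : forall t, t1 <= t <= te -> L2 t = l2)
    by (apply const_on; intros; apply L2_d, Hode; auto).
  assert (Hc : 0 < sq3 c0 c1 c2).
  { destruct (Hode t1 ltac:(lra)) as [HN _]. apply sqrt_pos_sq3; exact HN. }
  destruct (Req_dec (sq3 l0 l1 l2) 0) as [HL|HL].
  -
    apply sq3_zero in HL. destruct HL as (Hl0 & Hl1 & Hl2).
    intros t Ht. destruct (Hode t1 ltac:(lra)) as [HN1 _].
    destruct (Hode t Ht) as [HNt _].
    assert (D0 : (fun s => x0 s / N3 s) t = (fun s => x0 s / N3 s) t1).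
    { apply (const_on (fun s => x0 s / N3 s) t1 te); [|lra]. intros c Hc'.
      eapply dl_eq. apply dir0_d, Hode; auto. rewrite HL1, HL2 by auto. rewrite Hl1, Hl2. field.
      destruct (Hode c Hc') as [H' _]; lra. }
    assert (D1 : (fun s => x1 s / N3 s) t = (fun s => x1 s / N3 s) t1).
    { apply (const_on (fun s => x1 s / N3 s) t1 te); [|lra]. intros c Hc'.
      eapply dl_eq. apply dir1_d, Hode; auto. rewrite HL0, HL2 by auto. rewrite Hl0, Hl2. field.
      destruct (Hode c Hc') as [H' _]; lra. }
    assert (D2 : (fun s => x2 s / N3 s) t = (fun s => x2 s / N3 s) t1).
    { apply (const_on (fun s => x2 s / N3 s) t1 te); [|lra]. intros c Hc'.
      eapply dl_eq. apply dir2_d, Hode; auto. rewrite HL0, HL1 by auto. rewrite Hl0, Hl1. field.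
      destruct (Hode c Hc') as [H' _]; lra. }
    simpl in D0, D1, D2.
    repeat split.
    + replace (x0 t) with (x0 t / N3 t * N3 t) by (field; lra).
      rewrite D0. unfold c0, c1, c2. field. lra.
    + replace (x1 t) with (x1 t / N3 t * N3 t) by (field; lra).
      rewrite D1. unfold c0, c1, c2. field. lra.
    + replace (x2 t) with (x2 t / N3 t * N3 t) by (field; lra).
      rewrite D2. unfold c0, c1, c2. field. lra.
  - exfalso.
    assert (HLp : 0 < sq3 l0 l1 l2) by (pose proof (sq3_nonneg l0 l1 l2); lra).
    set (k0 := l1 * c2 - l2 * c1). set (k1 := l2 * c0 - l0 * c2). set (k2 := l0 * c1 - l1 * c0).
    set (f := fun s => x0 s * k0 + x1 s * k1 + x2 s * k2).
    set (f' := fun s => v0 s * k0 + v1 s * k1 + v2 s * k2).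
    assert (Hfd : forall t, t1 <= t <= te -> derivable_pt_lim f t (f' t))
      by (intros; apply lin_d, Hode; auto).
    assert (Hf1 : f t1 = 0) by (unfold f, k0, k1, k2, c0, c1, c2; ring).
    assert (Hfe : f te = 0) by (unfold f; rewrite E0, E1, E2; unfold k0, k1, k2, c0, c1, c2; ring).
    assert (Hf'1 : f' t1 = sq3 l0 l1 l2).
    { unfold f', k0, k1, k2, sq3, l0, l1, l2, L0, L1, L2, c0, c1, c2. ring. }
    assert (Hf'e : f' te = sq3 l0 l1 l2 / s).
    { apply Rmult_eq_reg_r with s; [|lra].
      transitivity (l0 * L0 te + l1 * L1 te + l2 * L2 te).
      - unfold f', L0, L1, L2. rewrite E0, E1, E2. unfold k0, k1, k2, c0, c1, c2. ring.
      - rewrite HL0, HL1, HL2 by lra. unfold sq3. field. lra. }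
    destruct (pos_deriv_right f t1 (f' t1)) as [d1 [Hd1 Hr1]].
    { apply Hfd; lra. } { lra. } { auto. }
    destruct (pos_deriv_left f te (f' te)) as [d2 [Hd2 Hr2]].
    { apply Hfd; lra. } { rewrite Hf'e. apply Rdiv_lt_0_compat; lra. } { auto. }
    set (h := Rmin (Rmin (d1 / 2) (d2 / 2)) ((te - t1) / 3)).
    assert (Hh0 : 0 < h) by (apply Rmin_pos; [apply Rmin_pos|]; lra).
    assert (Hh1 : h <= Rmin (d1 / 2) (d2 / 2)) by apply Rmin_l.
    assert (Hh2 : h <= (te - t1) / 3) by apply Rmin_r.
    assert (Hh3 : Rmin (d1 / 2) (d2 / 2) <= d1 / 2) by apply Rmin_l.
    assert (Hh4 : Rmin (d1 / 2) (d2 / 2) <= d2 / 2) by apply Rmin_r.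
    destruct (last_zero f f' (t1 + h) (te - h)) as [ts [Hts [Hfts Hf'ts]]].
    { lra. } { intros t Ht; apply Hfd; lra. } { apply Hr1; lra. } { apply Hr2; lra. }
    assert (Hts' : t1 <= ts <= te) by lra.
    set (y0 := x0 ts). set (y1 := x1 ts). set (y2 := x2 ts).
    assert (Ey0 : L0 ts = l0) by auto. assert (Ey1 : L1 ts = l1) by auto. assert (Ey2 : L2 ts = l2) by auto.
    assert (HyL : y0 * l0 + y1 * l1 + y2 * l2 = 0).
    { rewrite <- Ey0, <- Ey1, <- Ey2. unfold y0, y1, y2, L0, L1, L2. ring. }
    assert (HcL : c0 * l0 + c1 * l1 + c2 * l2 = 0).
    { unfold c0, c1, c2, l0, l1, l2, L0, L1, L2. ring. }
    assert (HyK : y0 * k0 + y1 * k1 + y2 * k2 = 0) by exact Hfts.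
    set (u0 := y1 * c2 - y2 * c1). set (u1 := y2 * c0 - y0 * c2). set (u2 := y0 * c1 - y1 * c0).
    assert (Hlag : sq3 u0 u1 u2 * sq3 l0 l1 l2 =
       sq3 (u1 * l2 - u2 * l1) (u2 * l0 - u0 * l2) (u0 * l1 - u1 * l0) + (u0 * l0 + u1 * l1 + u2 * l2) ^ 2)
      by (unfold sq3; ring).
    assert (Hx0 : u1 * l2 - u2 * l1 = c0 * (y0 * l0 + y1 * l1 + y2 * l2) - y0 * (c0 * l0 + c1 * l1 + c2 * l2))
      by (unfold u1, u2; ring).
    assert (Hx1 : u2 * l0 - u0 * l2 = c1 * (y0 * l0 + y1 * l1 + y2 * l2) - y1 * (c0 * l0 + c1 * l1 + c2 * l2))
      by (unfold u0, u2; ring).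
    assert (Hx2 : u0 * l1 - u1 * l0 = c2 * (y0 * l0 + y1 * l1 + y2 * l2) - y2 * (c0 * l0 + c1 * l1 + c2 * l2))
      by (unfold u0, u1; ring).
    assert (HuL : u0 * l0 + u1 * l1 + u2 * l2 = - (y0 * k0 + y1 * k1 + y2 * k2))
      by (unfold u0, u1, u2, k0, k1, k2; ring).
    rewrite Hx0, Hx1, Hx2, HuL, HyL, HcL, HyK in Hlag.
    assert (Hu : sq3 u0 u1 u2 = 0).
    { assert (sq3 u0 u1 u2 * sq3 l0 l1 l2 = 0) by (rewrite Hlag; unfold sq3; ring).
      apply Rmult_integral in H. destruct H; auto; lra. }
    apply sq3_zero in Hu. destruct Hu as (Hu0 & Hu1 & Hu2).
    set (lam := (y0 * c0 + y1 * c1 + y2 * c2) / sq3 c0 c1 c2).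
    assert (A0 : y0 * sq3 c0 c1 c2 = (y0 * c0 + y1 * c1 + y2 * c2) * c0).
    { transitivity ((y0 * c0 + y1 * c1 + y2 * c2) * c0 - (u1 * c2 - u2 * c1)); [unfold sq3, u1, u2; ring|].
      rewrite Hu1, Hu2; ring. }
    assert (A1 : y1 * sq3 c0 c1 c2 = (y0 * c0 + y1 * c1 + y2 * c2) * c1).
    { transitivity ((y0 * c0 + y1 * c1 + y2 * c2) * c1 - (u2 * c0 - u0 * c2)); [unfold sq3, u0, u2; ring|].
      rewrite Hu0, Hu2; ring. }
    assert (A2 : y2 * sq3 c0 c1 c2 = (y0 * c0 + y1 * c1 + y2 * c2) * c2).
    { transitivity ((y0 * c0 + y1 * c1 + y2 * c2) * c2 - (u0 * c1 - u1 * c0)); [unfold sq3, u0, u1; ring|].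
      rewrite Hu0, Hu1; ring. }
    assert (Hy : y0 = lam * c0 /\ y1 = lam * c1 /\ y2 = lam * c2).
    { unfold lam. repeat split; apply Rmult_eq_reg_r with (sq3 c0 c1 c2); try lra.
      - rewrite A0. field. lra.
      - rewrite A1. field. lra.
      - rewrite A2. field. lra. }
    destruct Hy as (Hy0 & Hy1 & Hy2).
    assert (Hlamf : lam * f' ts = sq3 l0 l1 l2).
    { transitivity (l0 * L0 ts + l1 * L1 ts + l2 * L2 ts).
      - unfold f', L0, L1, L2. fold y0 y1 y2. rewrite Hy0, Hy1, Hy2. unfold k0, k1, k2. ring.
      - rewrite Ey0, Ey1, Ey2. unfold sq3; ring. }
    assert (Hlam : lam < 0).
    { destruct (Rle_or_lt 0 lam) as [H|H]; auto. exfalso.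
      assert (lam * f' ts <= 0) by nra. lra. }
    apply (Hneg ts lam Hts' Hlam); auto.
Qed.
End V3.

Definition Xc (q : R -> pt) (O : pt) (i : nat) (t : R) := q t i - O i.
Definition Vc (d : nat) (v : R -> pt) (i : nat) (t : R) := if Nat.ltb i d then v t i else 0.

Lemma norm_X d O q t : (d = 2 \/ d = 3)%nat -> inR d O -> inR d (q t) ->
  norm d (vsub (q t) O) = N3 (Xc q O 0) (Xc q O 1) (Xc q O 2) t.
Proof.
  intros Hd HO Hq. rewrite (norm3 d _ Hd (inR_vsub d _ _ Hq HO)). reflexivity.
Qed.

Lemma hull_one d O q tA tB t : tA <= t <= tB -> (forall i, (i < d)%nat -> q t i = O i) ->
  InArcHull d q tA tB O.
Proof.
  intros Ht H. exists 1%nat, (fun _ => 1), (fun _ => t). split; [|split].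
  - intros k Hk. split; lra.
  - simpl. ring.
  - intros i Hi. simpl. rewrite H; auto; ring.
Qed.

Lemma hull_two d O q tA tB t t' lam : tA <= t <= tB -> tA <= t' <= tB -> lam < 0 ->
  (forall i, (i < d)%nat -> q t' i - O i = lam * (q t i - O i)) ->
  InArcHull d q tA tB O.
Proof.
  intros Ht Ht' Hl H.
  exists 2%nat, (fun k => if Nat.eqb k 0 then - lam / (1 - lam) else 1 / (1 - lam)),
    (fun k => if Nat.eqb k 0 then t else t'). split; [|split].
  - intros k Hk. destruct k as [|k]; simpl.
    + split; [|lra]. apply Rmult_le_pos; [lra|]. left; apply Rinv_0_lt_compat; lra.
    + split; [|lra]. apply Rmult_le_pos; [lra|]. left; apply Rinv_0_lt_compat; lra.
  - simpl. field. lra.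
  - intros i Hi. simpl. specialize (H i Hi).
    replace (q t' i) with (O i + lam * (q t i - O i)) by lra. field. lra.
Qed.

Lemma no_collision d O q tA tB t : (d = 2 \/ d = 3)%nat -> inR d O -> inR d (q t) ->
  DirectArc d O q tA tB -> tA <= t <= tB -> 0 < norm d (vsub (q t) O).
Proof.
  intros Hd HO Hq Hdir Ht. rewrite (norm_X d O q t Hd HO Hq). unfold N3.
  destruct (sqrt_pos (sq3 (Xc q O 0 t) (Xc q O 1 t) (Xc q O 2 t))) as [H|H]; auto.
  exfalso. apply Hdir. apply (hull_one d O q tA tB t Ht).
  symmetry in H. apply sqrt_eq_0 in H; [|apply sq3_nonneg].
  apply sq3_zero in H. destruct H as (H0 & H1 & H2). unfold Xc in *.
  intros i Hi. destruct (lt_d_cases d i Hd Hi) as [->|[->| ->]]; lra.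
Qed.

Lemma kepler_ODE3 d O q v t : (d = 2 \/ d = 3)%nat -> inR d O -> (forall t, inR d (q t)) ->
  0 < norm d (vsub (q t) O) ->
  (forall i, (i < d)%nat ->
     derivable_pt_lim (fun s => q s i) t (v t i) /\
     derivable_pt_lim (fun s => v s i) t (- (q t i - O i) / (norm d (vsub (q t) O)) ^ 3)) ->
  ODE3 (Xc q O 0) (Xc q O 1) (Xc q O 2) (Vc d v 0) (Vc d v 1) (Vc d v 2) t.
Proof.
  intros Hd HO Hq Hn Hder. rewrite (norm_X d O q t Hd HO (Hq t)) in Hn, Hder.
  assert (G : forall i, (i < d)%nat ->
    derivable_pt_lim (Xc q O i) t (Vc d v i t) /\
    derivable_pt_lim (Vc d v i) t (- Xc q O i t / N3 (Xc q O 0) (Xc q O 1) (Xc q O 2) t ^ 3)).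
  { intros i Hi. destruct (Hder i Hi) as [D1 D2].
    assert (Hb : Nat.ltb i d = true) by (apply Nat.ltb_lt; auto).
    unfold Vc, Xc. rewrite Hb. split.
    - eapply dl_eq. apply dl_minus; [exact D1| apply dl_const]. ring.
    - replace (fun t0 => if Nat.ltb i d then v t0 i else 0) with (fun t0 => v t0 i).
      exact D2. extensionality s. rewrite Hb; auto. }
  unfold ODE3. split; auto.
  destruct Hd as [Hd2|Hd3].
  - assert (Z : forall s, Xc q O 2 s = 0).
    { intros s. unfold Xc. subst d. rewrite (inR_2 _ (Hq s)), (inR_2 _ HO). ring. }
    assert (ZX : Xc q O 2 = fun _ => 0) by (extensionality s; apply Z).
    assert (ZV : Vc d v 2 = fun _ => 0) by (extensionality s; unfold Vc; subst d; reflexivity).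
    destruct (G 0%nat ltac:(lia)) as [A0 B0]. destruct (G 1%nat ltac:(lia)) as [A1 B1].
    repeat split; auto.
    + rewrite ZX, ZV. apply dl_const.
    + rewrite ZV. eapply dl_eq; [apply dl_const|]. rewrite Z. unfold Rdiv. ring.
  - destruct (G 0%nat ltac:(lia)) as [A0 B0]. destruct (G 1%nat ltac:(lia)) as [A1 B1].
    destruct (G 2%nat ltac:(lia)) as [A2 B2].
    repeat split; auto.
Qed.

Definition uvec d (O A : pt) : pt := fun i => (A i - O i) / norm d (vsub A O).
Definition rho d (O A : pt) (q : R -> pt) (t : R) :=
  Xc q O 0%nat t * uvec d O A 0%nat + Xc q O 1%nat t * uvec d O A 1%nat + Xc q O 2%nat t * uvec d O A 2%nat.

Lemma comp3 d (P Q : pt) (c : R) : (d = 2 \/ d = 3)%nat -> inR d P -> inR d Q ->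
  (forall i, (i < d)%nat -> P i = c * Q i) -> forall i, (i < 3)%nat -> P i = c * Q i.
Proof.
  intros Hd HP HQ H i Hi. destruct (Nat.lt_ge_cases i d) as [Hlt|Hge]; auto.
  rewrite HP, HQ by auto. ring.
Qed.

Lemma normA d O A : (d = 2 \/ d = 3)%nat -> inR d O -> inR d A ->
  norm d (vsub A O) = sqrt (sq3 (A 0%nat - O 0%nat) (A 1%nat - O 1%nat) (A 2%nat - O 2%nat)).
Proof. intros Hd HO HA. rewrite (norm3 d _ Hd (inR_vsub d _ _ HA HO)). reflexivity. Qed.

Lemma uvec_unit d O A : (d = 2 \/ d = 3)%nat -> inR d O -> inR d A -> 0 < norm d (vsub A O) ->
  sq3 (uvec d O A 0%nat) (uvec d O A 1%nat) (uvec d O A 2%nat) = 1.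
Proof.
  intros Hd HO HA Hn. unfold uvec. pose proof (normA d O A Hd HO HA) as E.
  set (S := sq3 (A 0%nat - O 0%nat) (A 1%nat - O 1%nat) (A 2%nat - O 2%nat)) in *.
  assert (HS : norm d (vsub A O) * norm d (vsub A O) = S)
    by (rewrite E; apply sqrt_sqrt; apply sq3_nonneg).
  transitivity (S / (norm d (vsub A O) * norm d (vsub A O))).
  { unfold S, sq3. field. lra. }
  rewrite HS. field. rewrite <- HS. nra.
Qed.

Lemma arc_radial d O A q t1 T s :
  (d = 2 \/ d = 3)%nat -> inR d O -> inR d A -> 0 < norm d (vsub A O) -> 0 < T -> 0 < s ->
  KeplerArc d O q t1 (t1 + T) -> DirectArc d O q t1 (t1 + T) -> eqpt d (q t1) A ->
  (forall i, (i < d)%nat -> q (t1 + T) i - O i = s * (A i - O i)) ->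
  exists w : R -> R, forall t, t1 <= t <= t1 + T ->
    0 < rho d O A q t /\ derivable_pt_lim (rho d O A q) t (w t) /\
    derivable_pt_lim w t (- / (rho d O A q t) ^ 2) /\
    (forall i, (i < d)%nat -> q t i = O i + rho d O A q t * uvec d O A i).
Proof.
  intros Hd HO HA HnA HT Hs HK Hdir Hq1 Hqe.
  destruct HK as [Hlt [HinR [a [b [v [h [Ha [Hb [Hcont [Hder [Hen [Hcol Hray]]]]]]]]]]]].
  set (X0 := Xc q O 0%nat). set (X1 := Xc q O 1%nat). set (X2 := Xc q O 2%nat).
  set (V0 := Vc d v 0). set (V1 := Vc d v 1). set (V2 := Vc d v 2).
  assert (Hode : forall t, t1 <= t <= t1 + T -> ODE3 X0 X1 X2 V0 V1 V2 t).
  { intros t Ht. apply kepler_ODE3; auto.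
    - apply (no_collision d O q t1 (t1 + T) t); auto.
    - apply Hder; [lra|]. apply (no_collision d O q t1 (t1 + T) t); auto. }
  assert (HX1 : forall i, (i < 3)%nat -> Xc q O i t1 = A i - O i).
  { intros i Hi. unfold Xc. destruct (Nat.lt_ge_cases i d) as [Hl|Hg].
    - rewrite Hq1; auto.
    - rewrite (HinR t1 i Hg), HA, HO; auto. }
  assert (HXe : forall i, (i < 3)%nat -> Xc q O i (t1 + T) = s * Xc q O i t1).
  { intros i Hi. rewrite HX1 by auto. unfold Xc. destruct (Nat.lt_ge_cases i d) as [Hl|Hg].
    - apply Hqe; auto.
    - rewrite (HinR _ i Hg), HA, HO; auto. ring. }
  assert (Hrad := radial3 X0 X1 X2 V0 V1 V2 t1 (t1 + T) s ltac:(lra) Hode Hs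
     (HXe 0%nat ltac:(lia)) (HXe 1%nat ltac:(lia)) (HXe 2%nat ltac:(lia))).
  assert (Hneg : forall t lam, t1 <= t <= t1 + T -> lam < 0 ->
     X0 t = lam * X0 t1 -> X1 t = lam * X1 t1 -> X2 t = lam * X2 t1 -> False).
  { intros t lam Ht Hl E0 E1 E2. apply Hdir.
    apply (hull_two d O q t1 (t1 + T) t1 t lam); try lra.
    intros i Hi. destruct (lt_d_cases d i Hd Hi) as [->|[->| ->]]; assumption. }
  specialize (Hrad Hneg).
  assert (HN1 : N3 X0 X1 X2 t1 = norm d (vsub A O)).
  { rewrite (normA d O A Hd HO HA). unfold N3, X0, X1, X2.
    rewrite !HX1 by lia. reflexivity. }
  pose proof (uvec_unit d O A Hd HO HA HnA) as Hu.
  set (u0 := uvec d O A 0%nat) in *. set (u1 := uvec d O A 1%nat) in *. set (u2 := uvec d O A 2%nat) in *.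
  assert (Hrep : forall t, t1 <= t <= t1 + T -> forall i, (i < 3)%nat ->
      Xc q O i t = N3 X0 X1 X2 t * uvec d O A i).
  { intros t Ht i Hi. destruct (Hrad t Ht) as (R0 & R1 & R2).
    destruct (Hode t1 ltac:(lra)) as [HN1p _].
    assert (Y0 : X0 t1 = A 0%nat - O 0%nat) by (apply HX1; lia).
    assert (Y1 : X1 t1 = A 1%nat - O 1%nat) by (apply HX1; lia).
    assert (Y2 : X2 t1 = A 2%nat - O 2%nat) by (apply HX1; lia).
    unfold uvec. rewrite <- HN1.
    assert (i = 0 \/ i = 1 \/ i = 2)%nat as [->|[->| ->]] by lia.
    - change (Xc q O 0%nat t) with (X0 t). rewrite R0, Y0. field. lra.
    - change (Xc q O 1%nat t) with (X1 t). rewrite R1, Y1. field. lra.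
    - change (Xc q O 2%nat t) with (X2 t). rewrite R2, Y2. field. lra. }
  assert (Hrho : forall t, t1 <= t <= t1 + T -> rho d O A q t = N3 X0 X1 X2 t).
  { intros t Ht. unfold rho. rewrite !(Hrep t Ht) by lia. fold u0 u1 u2.
    transitivity (N3 X0 X1 X2 t * sq3 u0 u1 u2); [unfold sq3; ring|]. rewrite Hu; ring. }
  exists (fun t => V0 t * u0 + V1 t * u1 + V2 t * u2).
  intros t Ht. destruct (Hode t Ht) as [HNt _].
  split; [|split; [|split]].
  - rewrite Hrho; auto.
  - apply (lin_d X0 X1 X2 V0 V1 V2 u0 u1 u2 t (Hode t Ht)).
  - eapply dl_eq. apply (linv_d X0 X1 X2 V0 V1 V2 u0 u1 u2 t (Hode t Ht)).
    change (X0 t * u0 + X1 t * u1 + X2 t * u2) with (rho d O A q t).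
    rewrite Hrho by auto. field. lra.
  - intros i Hi. rewrite Hrho by auto.
    assert (Hi3 : (i < 3)%nat) by (destruct Hd; lia).
    rewrite <- (Hrep t Ht i Hi3). unfold Xc. ring.
Qed.

Lemma shift_d (f : R -> R) t s l : derivable_pt_lim f (t + s) l ->
  derivable_pt_lim (fun x => f (t + x)) s l.
Proof.
  intros H.
  assert (Hid : derivable_pt_lim (fun x => t + x) s 1).
  { eapply dl_eq. apply dl_plus; [apply dl_const| apply derivable_pt_lim_id]. ring. }
  pose proof (derivable_pt_lim_comp (fun x => t + x) f s 1 l Hid H) as Hc.
  unfold comp in Hc. eapply dl_eq; [exact Hc|ring].
Qed.

Lemma rho_at d O A q t c : (d = 2 \/ d = 3)%nat -> inR d O -> inR d A -> inR d (q t) ->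
  0 < norm d (vsub A O) ->
  (forall i, (i < d)%nat -> q t i - O i = c * (A i - O i)) ->
  rho d O A q t = c * norm d (vsub A O).
Proof.
  intros Hd HO HA Hq Hn H.
  assert (H3 : forall i, (i < 3)%nat -> Xc q O i t = c * (A i - O i)).
  { intros i Hi. unfold Xc. destruct (Nat.lt_ge_cases i d) as [Hl|Hg]; auto.
    rewrite Hq, HA, HO; auto. ring. }
  unfold rho, uvec. rewrite !H3 by lia.
  pose proof (normA d O A Hd HO HA) as E.
  set (S := sq3 (A 0%nat - O 0%nat) (A 1%nat - O 1%nat) (A 2%nat - O 2%nat)) in *.
  assert (HS : norm d (vsub A O) * norm d (vsub A O) = S)
    by (rewrite E; apply sqrt_sqrt; apply sq3_nonneg).
  transitivity (c * S / norm d (vsub A O)). { unfold S, sq3. field. lra. }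
  rewrite <- HS. field. lra.
Qed.

Lemma uniqueness_part d O A B T :
  (d = 2 \/ d = 3)%nat -> inR d O -> inR d A -> inR d B ->
  0 < norm d (vsub A O) ->
  (exists s : R, 0 < s /\ forall i, (i < d)%nat -> B i - O i = s * (A i - O i)) ->
  0 < T ->
  forall (q1 q2 : R -> pt) (t1 t2 : R),
    ArcFromTo d O A B q1 t1 T -> DirectArc d O q1 t1 (t1 + T) ->
    ArcFromTo d O A B q2 t2 T -> DirectArc d O q2 t2 (t2 + T) ->
    forall s, 0 <= s <= T -> eqpt d (q1 (t1 + s)) (q2 (t2 + s)).
Proof.
  intros Hd HO HA HB HnA [s [Hs HBs]] HT q1 q2 t1 t2 [K1 [S1 E1]] D1 [K2 [S2 E2]] D2.
  assert (Hin1 : forall t, inR d (q1 t)) by (destruct K1 as [_ [H _]]; exact H).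
  assert (Hin2 : forall t, inR d (q2 t)) by (destruct K2 as [_ [H _]]; exact H).
  assert (He1 : forall i, (i < d)%nat -> q1 (t1 + T) i - O i = s * (A i - O i))
    by (intros i Hi; rewrite E1; auto).
  assert (He2 : forall i, (i < d)%nat -> q2 (t2 + T) i - O i = s * (A i - O i))
    by (intros i Hi; rewrite E2; auto).
  destruct (arc_radial d O A q1 t1 T s Hd HO HA HnA HT Hs K1 D1 S1 He1) as [w1 R1].
  destruct (arc_radial d O A q2 t2 T s Hd HO HA HnA HT Hs K2 D2 S2 He2) as [w2 R2].
  set (r1 := fun x => rho d O A q1 (t1 + x)). set (r2 := fun x => rho d O A q2 (t2 + x)).
  assert (H1 : forall x, 0 <= x <= T -> 0 < r1 x /\ derivable_pt_lim r1 x (w1 (t1 + x)) /\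
        derivable_pt_lim (fun y => w1 (t1 + y)) x (- / (r1 x)^2)).
  { intros x Hx. destruct (R1 (t1 + x) ltac:(lra)) as (P & Q & U & _).
    repeat split; auto; apply shift_d; auto. }
  assert (H2 : forall x, 0 <= x <= T -> 0 < r2 x /\ derivable_pt_lim r2 x (w2 (t2 + x)) /\
        derivable_pt_lim (fun y => w2 (t2 + y)) x (- / (r2 x)^2)).
  { intros x Hx. destruct (R2 (t2 + x) ltac:(lra)) as (P & Q & U & _).
    repeat split; auto; apply shift_d; auto. }
  assert (B10 : r1 0 = norm d (vsub A O)).
  { unfold r1. rewrite Rplus_0_r. rewrite (rho_at d O A q1 t1 1); auto; [ring|].
    intros i Hi; rewrite S1; auto; ring. }
  assert (B20 : r2 0 = norm d (vsub A O)).
  { unfold r2. rewrite Rplus_0_r. rewrite (rho_at d O A q2 t2 1); auto; [ring|].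
    intros i Hi; rewrite S2; auto; ring. }
  assert (B1T : r1 T = s * norm d (vsub A O)) by (unfold r1; apply rho_at; auto).
  assert (B2T : r2 T = s * norm d (vsub A O)) by (unfold r2; apply rho_at; auto).
  intros x Hx i Hi.
  assert (Le1 := max_principle r1 r2 _ _ T HT H1 H2 ltac:(lra) ltac:(lra) x Hx).
  assert (Le2 := max_principle r2 r1 _ _ T HT H2 H1 ltac:(lra) ltac:(lra) x Hx).
  destruct (R1 (t1 + x) ltac:(lra)) as (_ & _ & _ & Q1).
  destruct (R2 (t2 + x) ltac:(lra)) as (_ & _ & _ & Q2).
  rewrite Q1, Q2 by auto. fold (r1 x) (r2 x).
  replace (r1 x) with (r2 x) by lra. reflexivity.
Qed.

Definition RadialExist := forall r0 r1 T, 0 < r0 -> 0 < r1 -> r0 <> r1 -> 0 < T ->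
  exists (r w : R -> R) (al be : R), al < 0 /\ T < be /\
   (forall t, al < t < be -> 0 < r t /\ derivable_pt_lim r t (w t) /\
        derivable_pt_lim w t (- / (r t) ^ 2)) /\ r 0 = r0 /\ r T = r1.

Lemma sumR_lin n (w : nat -> R) (a b : R) (r : nat -> R) :
  sumR n (fun k => w k * (a + r k * b)) = a * sumR n w + b * sumR n (fun k => w k * r k).
Proof. induction n; simpl; [ring|]. rewrite IHn. ring. Qed.

Lemma sumR_pos n (w r : nat -> R) : (forall k, (k < n)%nat -> 0 <= w k /\ 0 < r k) ->
  0 <= sumR n (fun k => w k * r k) /\ (0 < sumR n w -> 0 < sumR n (fun k => w k * r k)).
Proof.
  induction n; intros H; simpl.
  - split; lra.
  - destruct IHn as [IH1 IH2]. { intros k Hk; apply H; lia. }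
    destruct (H n ltac:(lia)) as [Hw Hr].
    split. { assert (0 <= w n * r n) by nra. lra. }
    intros Hs. destruct (Rle_or_lt (sumR n w) 0) as [Hle|Hlt].
    + assert (0 < w n) by lra. assert (0 < w n * r n) by nra. lra.
    + specialize (IH2 Hlt). assert (0 <= w n * r n) by nra. lra.
Qed.

Lemma exists_nonzero_coord d O A : (d = 2 \/ d = 3)%nat -> inR d O -> inR d A ->
  0 < norm d (vsub A O) -> exists i, (i < d)%nat /\ A i - O i <> 0.
Proof.
  intros Hd HO HA Hn. rewrite (normA d O A Hd HO HA) in Hn.
  apply sqrt_pos_sq3 in Hn.
  destruct (Req_dec (A 0%nat - O 0%nat) 0) as [E0|E0]; [|exists 0%nat; split; [lia|auto]].
  destruct (Req_dec (A 1%nat - O 1%nat) 0) as [E1|E1]; [|exists 1%nat; split; [lia|auto]].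
  destruct (Req_dec (A 2%nat - O 2%nat) 0) as [E2|E2].
  - exfalso. rewrite E0, E1, E2 in Hn. unfold sq3 in Hn. lra.
  - exists 2%nat. split; auto. destruct Hd as [->| ->]; [|lia].
    exfalso. apply E2. rewrite (inR_2 _ HA), (inR_2 _ HO). ring.
Qed.

Lemma existence_part (RE : RadialExist) d O A B T :
  (d = 2 \/ d = 3)%nat -> inR d O -> inR d A -> inR d B ->
  0 < norm d (vsub A O) -> 0 < norm d (vsub A B) ->
  (exists s : R, 0 < s /\ forall i, (i < d)%nat -> B i - O i = s * (A i - O i)) ->
  0 < T ->
  exists (q : R -> pt) (tA : R),
    ArcFromTo d O A B q tA T /\ DirectArc d O q tA (tA + T) /\ Rectilinear d O q tA (tA + T).
Proof.
  intros Hd HO HA HB HnA HAB [s [Hs HBs]] HT.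
  set (nA := norm d (vsub A O)) in *.
  set (u := uvec d O A).
  assert (Hs1 : s <> 1).
  { intros ->. assert (HAB' : forall i, (i < d)%nat -> A i - B i = 0).
    { intros i Hi. specialize (HBs i Hi). lra. }
    rewrite (norm3 d _ Hd (inR_vsub d _ _ HA HB)) in HAB.
    unfold vsub in HAB.
    assert (Z : forall i, (i < 3)%nat -> A i - B i = 0).
    { intros i Hi. destruct (Nat.lt_ge_cases i d); auto. rewrite HA, HB; auto; ring. }
    rewrite !Z in HAB by lia. unfold sq3 in HAB. rewrite Rmult_0_l, !Rplus_0_l, sqrt_0 in HAB. lra. }
  assert (Hne : nA <> s * nA) by (intros H; apply Hs1; apply Rmult_eq_reg_r with nA; lra).
  destruct (RE nA (s * nA) T HnA ltac:(nra) Hne HT) as (r & w & al & be & Hal & Hbe & Hode & Hr0 & HrT).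
  assert (Hu : sq3 (u 0%nat) (u 1%nat) (u 2%nat) = 1) by (apply uvec_unit; auto).
  assert (HuR : inR d u) by (intros i Hi; unfold u, uvec; rewrite HA, HO by auto; unfold Rdiv; ring).
  set (q := fun t : R => fun i : nat => O i + r t * u i).
  assert (HqR : forall t, inR d (q t)) by (intros t i Hi; unfold q; rewrite HO, HuR; auto; ring).
  assert (Hnq : forall t, 0 < r t -> norm d (vsub (q t) O) = r t).
  { intros t Hrt. rewrite (norm3 d _ Hd (inR_vsub d _ _ (HqR t) HO)). unfold vsub, q.
    replace (sq3 (O 0%nat + r t * u 0%nat - O 0%nat) (O 1%nat + r t * u 1%nat - O 1%nat)
              (O 2%nat + r t * u 2%nat - O 2%nat)) with (r t * r t * sq3 (u 0%nat) (u 1%nat) (u 2%nat))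
      by (unfold sq3; ring).
    rewrite Hu, Rmult_1_r. apply sqrt_square. lra. }
  assert (HuA : forall i, (i < d)%nat -> nA * u i = A i - O i).
  { intros i Hi. unfold u, uvec. fold nA. field. lra. }
  set (v := fun t : R => fun i : nat => w t * u i).
  set (E := fun t => w t * w t / 2 - 1 / r t).
  assert (HE : forall t, al < t < be -> derivable_pt_lim E t 0).
  { intros t Ht. destruct (Hode t Ht) as (P & Q & U). unfold E.
    eapply dl_eq. apply dl_minus.
    - apply (derivable_pt_lim_div (fun t => w t * w t) (fun _ => 2)).
      apply dl_mult; eauto. apply dl_const. lra.
    - apply (derivable_pt_lim_div (fun _ => 1) r). apply dl_const. eauto. lra.
    - unfold Rsqr. field. lra. }
  assert (HEc : forall t, al < t < be -> E t = E 0).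
  { intros t Ht. destruct (Rle_or_lt 0 t).
    - apply (const_on E 0 t); [|lra]. intros c Hc; apply HE; lra.
    - symmetry. apply (const_on E t 0); [|lra]. intros c Hc; apply HE; lra. }
  exists q, 0. split; [|split].
  - split; [|split].
    + split; [lra|]. split; [exact HqR|].
      exists al, be, v, (E 0). split; [lra|]. split; [lra|]. split; [|split; [|split; [|split]]].
      * intros t Ht i Hi. destruct (Hode t Ht) as (P & Q & U). unfold q.
        apply (derivable_cont _ _ (0 + w t * u i)). apply dl_plus; [apply dl_const|].
        rewrite Rmult_comm. replace (fun s => r s * u i) with (fun s => u i * r s)
          by (extensionality x; ring). apply dl_scal; auto.
      * intros t Ht Hn i Hi. destruct (Hode t Ht) as (P & Q & U). rewrite Hnq by auto.
        split.
        -- unfold q, v. eapply dl_eq. apply dl_plus; [apply dl_const|].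
           replace (fun s => r s * u i) with (fun s => u i * r s) by (extensionality x; ring).
           apply dl_scal; eauto. ring.
        -- unfold v. replace (fun s => w s * u i) with (fun s => u i * w s) by (extensionality x; ring).
           eapply dl_eq. apply dl_scal; eauto. unfold q. simpl. field. lra.
      * intros t Ht Hn. destruct (Hode t Ht) as (P & Q & U). rewrite Hnq by auto.
        rewrite <- (HEc t Ht). unfold E.
        rewrite (dot3 d (v t) (v t) Hd). 2:{ intros i Hi; unfold v; rewrite HuR; auto; ring. }
        unfold v. replace (w t * u 0%nat * (w t * u 0%nat) + w t * u 1%nat * (w t * u 1%nat) +
             w t * u 2%nat * (w t * u 2%nat)) with (w t * w t * sq3 (u 0%nat) (u 1%nat) (u 2%nat))
          by (unfold sq3; ring). rewrite Hu. idtac.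
        rewrite Rmult_1_r. reflexivity.
      * intros t0 Ht0 Hn. exfalso. destruct (Hode t0 Ht0) as (P & _). rewrite Hnq in Hn; lra.
      * intros [t0 [Ht0 Hn]]. exfalso. destruct (Hode t0 Ht0) as (P & _). rewrite Hnq in Hn; lra.
    + intros i Hi. unfold q. rewrite Hr0, HuA; auto. ring.
    + intros i Hi. unfold q. rewrite Rplus_0_l, HrT, Rmult_assoc, HuA by auto.
      specialize (HBs i Hi). lra.
  - intros [n [wt [ts [Hw [Hsw Hsum]]]]].
    destruct (exists_nonzero_coord d O A Hd HO HA HnA) as [i [Hi Hai]].
    specialize (Hsum i Hi). unfold q in Hsum.
    rewrite sumR_lin, Hsw in Hsum.
    destruct (sumR_pos n wt (fun k => r (ts k))) as [_ Hpos].
    { intros k Hk. destruct (Hw k Hk) as [Hw1 Hw2]. split; auto. apply Hode. lra. }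
    specialize (Hpos ltac:(lra)).
    assert (u i * sumR n (fun k => wt k * r (ts k)) = 0) by lra.
    apply Rmult_integral in H. destruct H as [H|H]; [|lra].
    apply Hai. rewrite <- (HuA i Hi), H. ring.
  - exists u. split; auto. split.
    + rewrite (norm3 d u Hd HuR), Hu, sqrt_1. lra.
    + intros t Ht. exists (r t). intros i Hi. reflexivity.
Qed.

Section GI.
Variables (Th th P W : R -> R) (lb ub : R).
Hypothesis Hlu : lb < ub.
Hypothesis HTh : forall u, lb <= u <= ub -> derivable_pt_lim Th u (th u) /\ 0 < th u.
Hypothesis HP : forall u, lb <= u <= ub -> 0 < P u /\ derivable_pt_lim P u (W u * th u) /\
   derivable_pt_lim W u (- th u / (P u) ^ 2).

Definition sig_inv (t : R) : R := epsilon (inhabits 0) (fun u => lb <= u <= ub /\ Th u = t).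

Lemma Th_incr : forall x y, lb <= x -> x < y -> y <= ub -> Th x < Th y.
Proof. apply (incr_on Th th lb ub); intros; apply HTh; auto. Qed.

Lemma Th_cont : forall u, lb <= u <= ub -> continuity_pt Th u.
Proof. intros u Hu. eapply derivable_cont. apply HTh; auto. Qed.

Lemma sig_spec t : Th lb <= t <= Th ub -> lb <= sig_inv t <= ub /\ Th (sig_inv t) = t.
Proof.
  intros Ht. unfold sig_inv. apply epsilon_spec.
  destruct (f_interv_is_interv Th lb ub t Hlu Ht Th_cont) as [u Hu]. exists u; auto.
Qed.

Lemma Th_inj x y : lb <= x <= ub -> lb <= y <= ub -> Th x = Th y -> x = y.
Proof.
  intros Hx Hy E. destruct (Rtotal_order x y) as [H|[H|H]]; auto.
  - pose proof (Th_incr x y ltac:(lra) H ltac:(lra)); lra.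
  - pose proof (Th_incr y x ltac:(lra) H ltac:(lra)); lra.
Qed.

Lemma sig_Th u : lb <= u <= ub -> sig_inv (Th u) = u.
Proof.
  intros Hu. assert (Hb : Th lb <= Th u <= Th ub).
  { split.
    - destruct (Req_dec lb u) as [E|E]; [rewrite E; lra|]. left; apply Th_incr; lra.
    - destruct (Req_dec u ub) as [E|E]; [rewrite E; lra|]. left; apply Th_incr; lra. }
  destruct (sig_spec _ Hb) as [H1 H2]. apply Th_inj; auto.
Qed.

Lemma sig_d t : Th lb < t < Th ub -> derivable_pt_lim sig_inv t (1 / th (sig_inv t)).
Proof.
  intros Ht.
  assert (Hlb : sig_inv (Th lb) = lb) by (apply sig_Th; lra).
  assert (Hub : sig_inv (Th ub) = ub) by (apply sig_Th; lra).
  assert (Prf : forall a, sig_inv (Th lb) <= a <= sig_inv (Th ub) -> derivable_pt Th a).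
  { intros a Ha. rewrite Hlb, Hub in Ha. exists (th a). apply HTh; auto. }
  assert (Hid : forall x, Th lb <= x <= Th ub -> comp Th sig_inv x = id x).
  { intros x Hx. unfold comp, id. apply sig_spec; auto. }
  assert (Hcont : continuity_pt sig_inv t).
  { apply (continuity_pt_recip_interv Th sig_inv lb ub Hlu).
    - intros; apply Th_incr; auto.
    - intros; apply Hid; auto.
    - intros; apply sig_spec; auto.
    - exact Th_cont.
    - exact Ht. }
  assert (Hs : lb <= sig_inv t <= ub) by (apply sig_spec; lra).
  assert (Hincr : sig_inv (Th lb) <= sig_inv t <= sig_inv (Th ub)) by (rewrite Hlb, Hub; auto).
  assert (Hlt : Th lb < Th ub) by (apply Th_incr; lra).
  pose proof (derivable_pt_lim_recip_interv Th sig_inv (Th lb) (Th ub) t Prf Hcont Hlt Ht Hincr Hid) as D.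
  rewrite (derive_pt_eq_0 Th (sig_inv t) (th (sig_inv t)) (Prf (sig_inv t) Hincr)) in D
    by (apply HTh; auto).
  apply D. destruct (HTh (sig_inv t) Hs); lra.
Qed.

Lemma GI_ode t : Th lb < t < Th ub ->
  0 < P (sig_inv t) /\
  derivable_pt_lim (fun s => P (sig_inv s)) t (W (sig_inv t)) /\
  derivable_pt_lim (fun s => W (sig_inv s)) t (- / (P (sig_inv t)) ^ 2).
Proof.
  intros Ht. pose proof (sig_d t Ht) as D.
  assert (Hs : lb <= sig_inv t <= ub) by (apply sig_spec; lra).
  destruct (HP _ Hs) as (H1 & H2 & H3). destruct (HTh _ Hs) as [_ Hth].
  split; auto. split.
  - eapply dl_eq. apply (derivable_pt_lim_comp sig_inv P t _ _ D H2). field. lra.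
  - eapply dl_eq. apply (derivable_pt_lim_comp sig_inv W t _ _ D H3). field. lra.
Qed.
End GI.

Lemma cp_plus (f g : R -> R) x : continuity_pt f x -> continuity_pt g x -> continuity_pt (fun t => f t + g t) x.
Proof. intros; apply (continuity_pt_plus f g); auto. Qed.
Lemma cp_minus (f g : R -> R) x : continuity_pt f x -> continuity_pt g x -> continuity_pt (fun t => f t - g t) x.
Proof. intros; apply (continuity_pt_minus f g); auto. Qed.
Lemma cp_mult (f g : R -> R) x : continuity_pt f x -> continuity_pt g x -> continuity_pt (fun t => f t * g t) x.
Proof. intros; apply (continuity_pt_mult f g); auto. Qed.
Lemma cp_div (f g : R -> R) x : continuity_pt f x -> continuity_pt g x -> g x <> 0 -> continuity_pt (fun t => f t / g t) x.
Proof. intros; apply (continuity_pt_div f g); auto. Qed.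
Lemma cp_const c x : continuity_pt (fun _ => c) x.
Proof. apply continuity_pt_const. intros a b; reflexivity. Qed.
Lemma cp_id x : continuity_pt (fun t => t) x.
Proof. apply derivable_continuous_pt. apply derivable_pt_id. Qed.
Lemma cp_comp (f g : R -> R) x : continuity_pt f x -> continuity_pt g (f x) -> continuity_pt (fun t => g (f t)) x.
Proof. intros H1 H2. apply (continuity_pt_comp f g x H1 H2). Qed.

Lemma cos_lt_1 u : 0 < u < 2 * PI -> cos u < 1.
Proof.
  intros Hu. replace u with (2 * (u / 2)) by field. rewrite cos_2a_sin.
  assert (0 < sin (u / 2)) by (apply sin_gt_0; lra). nra.
Qed.

Lemma one_minus_cos_pos u : 0 < u < 2 * PI -> 0 < 1 - cos u.
Proof. intros; pose proof (cos_lt_1 u H); lra. Qed.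

Lemma div_lt_self x e : 0 < x -> 1 < e -> x / e < x.
Proof.
  intros Hx He. apply (Rmult_lt_reg_r e); [lra|].
  replace (x / e * e) with x by (field; lra). nra.
Qed.

Section Ell.
Variables r0 r1 : R.
Hypothesis Hr0 : 0 < r0.
Hypothesis Hr01 : r0 < r1.

Definition eS := r1 / r0.
Definition ecA (sB : R) := 1 - (1 - cos sB) / eS.
Definition esA (sB : R) := acos (ecA sB).
Definition ea (sB : R) := r1 / (1 - cos sB).
Definition eT (sB : R) := ea sB * sqrt (ea sB) * ((sB - sin sB) - (esA sB - sin (esA sB))).

Lemma eS_gt1 : 1 < eS.
Proof. unfold eS. apply (Rmult_lt_reg_r r0); auto. unfold Rdiv. rewrite Rmult_assoc, Rinv_l; lra. Qed.

Lemma ecA_range sB : 0 < sB < 2 * PI -> -1 < ecA sB < 1.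
Proof.
  intros H. pose proof (one_minus_cos_pos sB H). pose proof (COS_bound sB) as [C1 C2].
  pose proof eS_gt1. unfold ecA. split.
  - assert ((1 - cos sB) / eS < 2).
    { apply (Rmult_lt_reg_r eS); [lra|]. unfold Rdiv; rewrite Rmult_assoc, Rinv_l; lra. }
    lra.
  - assert (0 < (1 - cos sB) / eS) by (apply Rdiv_lt_0_compat; lra). lra.
Qed.

Lemma esA_range sB : 0 < sB < 2 * PI -> 0 < esA sB < PI.
Proof. intros H. apply acos_bound_lt, ecA_range; auto. Qed.

Lemma cos_esA sB : 0 < sB < 2 * PI -> cos (esA sB) = ecA sB.
Proof. intros H. apply cos_acos. pose proof (ecA_range sB H). lra. Qed.

Lemma esA_lt sB : 0 < sB < 2 * PI -> esA sB < sB.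
Proof.
  intros H. pose proof (esA_range sB H) as HA.
  destruct (Rle_or_lt sB PI) as [Hle|Hgt]; [|lra].
  destruct (Rlt_or_le (esA sB) sB) as [|Hge]; auto. exfalso.
  assert (cos (esA sB) <= cos sB).
  { destruct Hge as [Hlt|Heq]; [left; apply cos_decreasing_1; lra| rewrite <- Heq; lra]. }
  rewrite cos_esA in H0 by auto. unfold ecA in H0.
  pose proof (one_minus_cos_pos sB H). pose proof eS_gt1.
  assert ((1 - cos sB) / eS < 1 - cos sB) by (apply div_lt_self; lra).
  lra.
Qed.

Lemma ea_pos sB : 0 < sB < 2 * PI -> 0 < ea sB.
Proof. intros H. unfold ea. apply Rdiv_lt_0_compat; [lra|]. apply one_minus_cos_pos; auto. Qed.

Lemma ea_start sB : 0 < sB < 2 * PI -> ea sB * (1 - cos (esA sB)) = r0.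
Proof.
  intros H. rewrite cos_esA by auto. unfold ecA, ea, eS.
  pose proof (one_minus_cos_pos sB H). field. split; lra.
Qed.

Lemma ea_end sB : 0 < sB < 2 * PI -> ea sB * (1 - cos sB) = r1.
Proof. intros H. unfold ea. pose proof (one_minus_cos_pos sB H). field. lra. Qed.

(* the elliptic solution *)
Section Sol.
Variable sB : R.
Hypothesis HsB : 0 < sB < 2 * PI.
Let a := ea sB.
Let sA := esA sB.
Let ka := a * sqrt a.
Definition eTh u := ka * (u - sin u - (sA - sin sA)).
Definition eth u := ka * (1 - cos u).
Definition eP u := a * (1 - cos u).
Definition eW u := sin u / (sqrt a * (1 - cos u)).
Let lb := sA / 2.
Let ub := (sB + 2 * PI) / 2.

Lemma ea_facts : 0 < a /\ 0 < sqrt a /\ sqrt a * sqrt a = a /\ 0 < ka.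
Proof.
  assert (0 < a) by (apply ea_pos; auto).
  assert (0 < sqrt a) by (apply sqrt_lt_R0; auto).
  repeat split; auto. apply sqrt_sqrt; lra. unfold ka. nra.
Qed.

Lemma ell_lbub : 0 < lb /\ lb < sA /\ sA < sB /\ sB < ub /\ ub < 2 * PI.
Proof.
  pose proof (esA_range sB HsB). pose proof (esA_lt sB HsB).
  unfold lb, ub, sA. repeat split; lra.
Qed.

Lemma ell_HTh : forall u, lb <= u <= ub -> derivable_pt_lim eTh u (eth u) /\ 0 < eth u.
Proof.
  intros u Hu. pose proof ell_lbub as (H1 & H2 & H3 & H4 & H5). pose proof ea_facts as (A1 & A2 & A3 & A4).
  split.
  - unfold eTh, eth. eapply dl_eq. apply dl_scal. apply dl_minus; [apply dl_minus|].
    apply derivable_pt_lim_id. apply derivable_pt_lim_sin. apply dl_const. ring.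
  - unfold eth. apply Rmult_lt_0_compat; auto. apply one_minus_cos_pos. lra.
Qed.

Lemma ell_HP : forall u, lb <= u <= ub -> 0 < eP u /\ derivable_pt_lim eP u (eW u * eth u) /\
   derivable_pt_lim eW u (- eth u / (eP u) ^ 2).
Proof.
  intros u Hu. pose proof ell_lbub as (H1 & H2 & H3 & H4 & H5). pose proof ea_facts as (A1 & A2 & A3 & A4).
  assert (Hc : 0 < 1 - cos u) by (apply one_minus_cos_pos; lra).
  split; [|split].
  - unfold eP. apply Rmult_lt_0_compat; auto.
  - unfold eP, eW, eth, ka. eapply dl_eq. apply dl_scal. apply dl_minus. apply dl_const.
    apply derivable_pt_lim_cos.
    field. split; lra.
  - unfold eW, eth, eP, ka.
    eapply dl_eq. apply (derivable_pt_lim_div sin (fun u => sqrt a * (1 - cos u))).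
    apply derivable_pt_lim_sin. apply dl_scal. apply dl_minus. apply dl_const. apply derivable_pt_lim_cos.
    apply Rmult_integral_contrapositive; split; lra.
    unfold Rsqr. pose proof (sin2_cos2 u) as S. unfold Rsqr in S.
    replace (cos u * (sqrt a * (1 - cos u)) - sqrt a * (0 - - sin u) * sin u)
      with (sqrt a * (cos u - (sin u * sin u + cos u * cos u))) by ring.
    rewrite S. replace (sqrt a * (1 - cos u) * (sqrt a * (1 - cos u))) with (a * ((1 - cos u) * (1 - cos u))) by (transitivity (sqrt a * sqrt a * ((1 - cos u) * (1 - cos u))); [rewrite A3; ring| ring]). field. split; lra.
Qed.

Lemma ell_energy u : lb <= u <= ub -> eW u * eW u / 2 - 1 / eP u = - / (2 * a).
Proof.
  intros Hu. pose proof ell_lbub as (H1 & H2 & H3 & H4 & H5). pose proof ea_facts as (A1 & A2 & A3 & A4).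
  assert (Hc : 0 < 1 - cos u) by (apply one_minus_cos_pos; lra).
  unfold eW, eP. pose proof (sin2_cos2 u) as S. unfold Rsqr in S.
  replace (sin u / (sqrt a * (1 - cos u)) * (sin u / (sqrt a * (1 - cos u))))
    with ((sin u * sin u) / ((sqrt a * sqrt a) * ((1 - cos u) * (1 - cos u)))) by (field; split; lra).
  rewrite A3. replace (sin u * sin u) with ((1 - cos u) * (1 + cos u)) by nra.
  field. split; lra.
Qed.

Lemma ell_Th_A : eTh sA = 0.
Proof. unfold eTh. ring. Qed.
Lemma ell_Th_B : eTh sB = eT sB.
Proof. unfold eTh, eT, ka, a, sA. ring. Qed.

Lemma ell_solution : exists (r w : R -> R) (al be : R), al < 0 /\ eT sB < be /\
   (forall t, al < t < be -> 0 < r t /\ derivable_pt_lim r t (w t) /\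
        derivable_pt_lim w t (- / (r t) ^ 2)) /\ r 0 = r0 /\ r (eT sB) = r1.
Proof.
  pose proof ell_lbub as (H1 & H2 & H3 & H4 & H5).
  assert (Hlu : lb < ub) by lra.
  exists (fun t => eP (sig_inv eTh lb ub t)), (fun t => eW (sig_inv eTh lb ub t)),
    (eTh lb), (eTh ub).
  split; [|split; [|split; [|split]]].
  - rewrite <- ell_Th_A. apply (Th_incr eTh eth lb ub ell_HTh); lra.
  - rewrite <- ell_Th_B. apply (Th_incr eTh eth lb ub ell_HTh); lra.
  - intros t Ht. apply (GI_ode eTh eth eP eW lb ub Hlu ell_HTh ell_HP t Ht).
  - rewrite <- ell_Th_A, (sig_Th eTh eth lb ub Hlu ell_HTh) by lra. apply ea_start; auto.
  - rewrite <- ell_Th_B, (sig_Th eTh eth lb ub Hlu ell_HTh) by lra. apply ea_end; auto.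
Qed.
End Sol.
End Ell.

Module IntM.
From Coquelicot Require Import Coquelicot.


Lemma inv_sqrt_lip x y m : 0 < m -> m <= x -> m <= y ->
  Rabs (/ sqrt x - / sqrt y) <= Rabs (x - y) / (2 * m * sqrt m).
Proof.
  intros Hm Hx Hy.
  assert (Sm : 0 < sqrt m) by (apply sqrt_lt_R0; lra).
  assert (Sx : sqrt m <= sqrt x) by (apply sqrt_le_1_alt; lra).
  assert (Sy : sqrt m <= sqrt y) by (apply sqrt_le_1_alt; lra).
  assert (Ex : sqrt x * sqrt x = x) by (apply sqrt_sqrt; lra).
  assert (Ey : sqrt y * sqrt y = y) by (apply sqrt_sqrt; lra).
  assert (Em : sqrt m * sqrt m = m) by (apply sqrt_sqrt; lra).
  assert (E : / sqrt x - / sqrt y = (y - x) / (sqrt x * sqrt y * (sqrt x + sqrt y))).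
  { replace (y - x) with (sqrt y * sqrt y - sqrt x * sqrt x) by (rewrite Ex, Ey; ring).
    field. lra. }
  rewrite E. unfold Rdiv. rewrite Rabs_mult, Rabs_minus_sym.
  apply Rmult_le_compat_l; [apply Rabs_pos|].
  rewrite Rabs_inv. rewrite Rabs_pos_eq by (apply Rmult_le_pos; [apply Rmult_le_pos|]; lra).
  apply Rinv_le_contravar. apply Rmult_lt_0_compat; [lra|]. lra.
  apply Rle_trans with (sqrt m * sqrt m * (2 * sqrt m)); [rewrite Em; lra|].
  assert (sqrt m * sqrt m <= sqrt x * sqrt y) by (apply Rmult_le_compat; lra).
  assert (2 * sqrt m <= sqrt x + sqrt y) by lra.
  apply Rmult_le_compat; try lra.
Qed.

Section Int.
Variables r0 r1 : R.
Hypothesis Hr0 : 0 < r0.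
Hypothesis Hr01 : r0 < r1.

Definition hm := - 3 / (4 * r1).
Definition gI h x := / sqrt (2 * (h + / x)).

Lemma gI_dom h x : hm < h -> 0 < x < 4 * r1 / 3 -> 0 < h + / x.
Proof.
  intros Hh Hx. unfold hm in Hh.
  assert (3 / (4 * r1) < / x).
  { replace (3 / (4 * r1)) with (/ (4 * r1 / 3)) by (field; lra).
    apply Rinv_lt_contravar; nra. }
  unfold Rdiv in *. lra.
Qed.

Lemma gI_pos h x : hm < h -> 0 < x < 4 * r1 / 3 -> 0 < gI h x.
Proof.
  intros Hh Hx. pose proof (gI_dom h x Hh Hx).
  assert (0 < / (4 * r1)) by (apply Rinv_0_lt_compat; lra).
  unfold gI. apply Rinv_0_lt_compat, sqrt_lt_R0. lra.
Qed.

Lemma gI_cont h x : hm < h -> 0 < x < 4 * r1 / 3 -> continuity_pt (gI h) x.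
Proof.
  intros Hh Hx. pose proof (gI_dom h x Hh Hx).
  assert (0 < / (4 * r1)) by (apply Rinv_0_lt_compat; lra).
  unfold gI.
  apply (cp_comp (fun x => sqrt (2 * (h + / x))) Rinv).
  - apply (cp_comp (fun x => 2 * (h + / x)) sqrt).
    + apply cp_mult. apply cp_const. apply cp_plus. apply cp_const.
      apply (cp_comp (fun t => t) Rinv). apply cp_id.
      apply continuity_pt_inv. apply cp_id. lra.
    + apply continuity_pt_sqrt. lra.
  - apply continuity_pt_inv. apply cp_id. assert (0 < sqrt (2 * (h + / x))) by (apply sqrt_lt_R0; lra). lra.
Qed.

Lemma gI_contC h x : hm < h -> 0 < x < 4 * r1 / 3 -> continuous (gI h) x.
Proof. intros; apply continuity_pt_filterlim, gI_cont; auto. Qed.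

Lemma gI_ex h a b : hm < h -> 0 < a < 4 * r1 / 3 -> 0 < b < 4 * r1 / 3 -> ex_RInt (gI h) a b.
Proof.
  intros Hh Ha Hb. apply (@ex_RInt_continuous R_CompleteNormedModule). intros z Hz. apply gI_contC; auto.
  split.
  - apply Rlt_le_trans with (Rmin a b); [apply Rmin_glb_lt; lra| lra].
  - apply Rle_lt_trans with (Rmax a b); [lra| apply Rmax_lub_lt; lra].
Qed.

Definition Gam h x := RInt (gI h) r0 x.

Lemma Gam_d h x : hm < h -> 0 < x < 4 * r1 / 3 -> derivable_pt_lim (Gam h) x (gI h x).
Proof.
  intros Hh Hx. apply is_derive_Reals. unfold Gam.
  apply (is_derive_RInt (gI h) (fun b => RInt (gI h) r0 b) r0 x).
  - set (e := Rmin (x / 2) ((4 * r1 / 3 - x) / 2)).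
    assert (He : 0 < e) by (apply Rmin_pos; lra).
    exists (mkposreal e He). intros y Hy. change (Rabs (y - x) < e) in Hy.
    apply Rabs_def2 in Hy.
    assert (e <= x / 2) by apply Rmin_l. assert (e <= (4 * r1 / 3 - x) / 2) by apply Rmin_r.
    apply (@RInt_correct R_CompleteNormedModule). apply gI_ex; auto; lra.
  - apply gI_contC; auto.
Qed.

Lemma Gam_r0 h : Gam h r0 = 0.
Proof. unfold Gam. rewrite RInt_point. reflexivity. Qed.

Definition Tint h := Gam h r1.

Lemma Tint_cont h0 : hm < h0 -> continuity_pt Tint h0.
Proof.
  intros Hh0. intros eps Heps.
  set (d0 := (h0 - hm) / 2).
  assert (Hd0 : 0 < d0) by (unfold d0; lra).
  set (m := 2 * (d0 + / (4 * r1))).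
  assert (Hi4 : 0 < / (4 * r1)) by (apply Rinv_0_lt_compat; lra).
  assert (Hm : 0 < m) by (unfold m; lra).
  assert (Hsm : 0 < sqrt m) by (apply sqrt_lt_R0; lra).
  set (K := (r1 - r0) * 2 / (2 * m * sqrt m)).
  assert (HK : 0 < K) by (unfold K; apply Rdiv_lt_0_compat; [lra| apply Rmult_lt_0_compat; lra]).
  exists (Rmin d0 (eps / K)). split.
  { apply Rmin_pos; auto. apply Rdiv_lt_0_compat; auto. }
  intros h [[_ Hne] Hdist]. unfold R_dist in *.
  assert (Hd1 : Rabs (h - h0) < d0) by (eapply Rlt_le_trans; [exact Hdist| apply Rmin_l]).
  assert (Hd2 : Rabs (h - h0) < eps / K) by (eapply Rlt_le_trans; [exact Hdist| apply Rmin_r]).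
  apply Rabs_def2 in Hd1 as [Hd1a Hd1b].
  assert (Hh : hm < h) by (unfold d0 in *; lra).
  assert (Hdom : forall hh x, hm + d0 <= hh -> r0 <= x <= r1 -> m <= 2 * (hh + / x)).
  { intros hh x Hhh Hx.
    assert (/ r1 <= / x) by (apply Rinv_le_contravar; lra).
    assert (E : - 3 / (4 * r1) + / r1 = / (4 * r1)) by (field; lra).
    unfold m, hm in *. lra. }
  unfold Tint, Gam.
  assert (EQ : RInt (fun x => gI h x - gI h0 x) r0 r1 = RInt (gI h) r0 r1 - RInt (gI h0) r0 r1)
    by (apply (@RInt_minus R_CompleteNormedModule); apply gI_ex; auto; lra).
  change (Rabs (RInt (gI h) r0 r1 - RInt (gI h0) r0 r1) < eps). rewrite <- EQ.
  eapply Rle_lt_trans. apply abs_RInt_le_const with (M := 2 * Rabs (h - h0) / (2 * m * sqrt m)).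
  - lra.
  - apply (@ex_RInt_minus R_NormedModule (gI h) (gI h0)); apply gI_ex; auto; lra.
  - intros x Hx. unfold gI.
    eapply Rle_trans. apply (inv_sqrt_lip _ _ m Hm).
    + apply Hdom; [unfold d0 in *|]; lra.
    + apply Hdom; [unfold d0 in *|]; lra.
    + replace (2 * (h + / x) - 2 * (h0 + / x)) with (2 * (h - h0)) by ring.
      rewrite Rabs_mult, (Rabs_pos_eq 2) by lra. lra.
  - replace ((r1 - r0) * (2 * Rabs (h - h0) / (2 * m * sqrt m))) with (K * Rabs (h - h0))
      by (unfold K; field; lra).
    apply (Rmult_lt_compat_l K) in Hd2; auto.
    replace (K * (eps / K)) with eps in Hd2 by (field; lra). exact Hd2.
Qed.

Lemma Tint_small H : 0 < H -> Tint H <= (r1 - r0) / sqrt (2 * H).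
Proof.
  intros HH. assert (Hhm : hm < H) by (unfold hm; assert (0 < 3 / (4 * r1)) by (apply Rdiv_lt_0_compat; lra); unfold Rdiv in *; lra).
  assert (HsH : 0 < sqrt (2 * H)) by (apply sqrt_lt_R0; lra).
  unfold Tint, Gam.
  replace ((r1 - r0) / sqrt (2 * H)) with (RInt (fun _ => / sqrt (2 * H)) r0 r1).
  2:{ rewrite RInt_const. unfold scal; simpl. unfold mult; simpl. field. lra. }
  apply RInt_le. lra. apply gI_ex; auto; lra. apply ex_RInt_const.
  intros x Hx. unfold gI. apply Rinv_le_contravar; auto.
  apply sqrt_le_1_alt. assert (0 < / x) by (apply Rinv_0_lt_compat; lra). lra.
Qed.
End Int.

End IntM.
Import IntM.

Lemma dl_inv u : u <> 0 -> derivable_pt_lim (fun x => / x) u (- / (u * u)).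
Proof.
  intros Hu. replace (fun x => / x) with (fun x => (fun _ => 1) x / (fun y => y) x)
    by (extensionality x; unfold Rdiv; ring).
  eapply dl_eq. apply (derivable_pt_lim_div (fun _ => 1) (fun y => y)).
  apply dl_const. apply derivable_pt_lim_id. auto. unfold Rsqr. field. auto.
Qed.

Section Core.
Variables r0 r1 : R.
Hypothesis Hr0 : 0 < r0.
Hypothesis Hr01 : r0 < r1.

Definition iW h u := sqrt (2 * (h + / u)).

Lemma int_solution h : hm r1 < h ->
  exists (r w : R -> R) (al be : R), al < 0 /\ Tint r0 r1 h < be /\
   (forall t, al < t < be -> 0 < r t /\ derivable_pt_lim r t (w t) /\
        derivable_pt_lim w t (- / (r t) ^ 2)) /\ r 0 = r0 /\ r (Tint r0 r1 h) = r1.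
Proof.
  intros Hh.
  set (lb := r0 / 2). set (ub := 7 * r1 / 6).
  assert (Hlu : lb < ub) by (unfold lb, ub; lra).
  assert (Hdom : forall u, lb <= u <= ub -> 0 < u < 4 * r1 / 3) by (intros u Hu; unfold lb, ub in Hu; lra).
  assert (HTh : forall u, lb <= u <= ub -> derivable_pt_lim (Gam r0 h) u (gI h u) /\ 0 < gI h u).
  { intros u Hu. split; [apply (Gam_d r0 r1)| apply (gI_pos r0 r1)]; auto. }
  assert (HP : forall u, lb <= u <= ub -> 0 < (fun x => x) u /\
            derivable_pt_lim (fun x => x) u (iW h u * gI h u) /\
            derivable_pt_lim (iW h) u (- gI h u / ((fun x => x) u) ^ 2)).
  { intros u Hu. pose proof (Hdom u Hu) as Hd. pose proof (gI_dom r0 r1 Hr0 Hr01 h u Hh Hd) as Hg.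
    assert (Hs : 0 < sqrt (2 * (h + / u))) by (apply sqrt_lt_R0; lra).
    split; [lra|split].
    - eapply dl_eq. apply derivable_pt_lim_id. unfold iW, gI. field. lra.
    - unfold iW, gI.
      assert (D1 : derivable_pt_lim (fun x => 2 * (h + / x)) u (2 * (0 + - / (u * u)))).
      { apply dl_scal. apply dl_plus. apply dl_const.
        apply dl_inv. lra. }
      pose proof (derivable_pt_lim_comp (fun x => 2 * (h + / x)) sqrt u _ _ D1
         (derivable_pt_lim_sqrt (2 * (h + / u)) ltac:(lra))) as D2.
      unfold comp in D2. eapply dl_eq. exact D2. field. lra. }
  assert (E0 : Gam r0 h r0 = 0) by apply Gam_r0.
  exists (fun t => sig_inv (Gam r0 h) lb ub t), (fun t => iW h (sig_inv (Gam r0 h) lb ub t)),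
    (Gam r0 h lb), (Gam r0 h ub).
  split; [|split; [|split; [|split]]].
  - rewrite <- E0. apply (Th_incr _ _ lb ub HTh); unfold lb, ub; lra.
  - apply (Th_incr _ _ lb ub HTh); unfold lb, ub; lra.
  - intros t Ht. apply (GI_ode (Gam r0 h) (gI h) (fun x => x) (iW h) lb ub Hlu HTh HP t Ht).
  - rewrite <- E0. apply (sig_Th _ _ lb ub Hlu HTh). unfold lb, ub; lra.
  - apply (sig_Th _ _ lb ub Hlu HTh). unfold lb, ub; lra.
Qed.

Definition h1 := - / (2 * r1).

Lemma hm_h1 : hm r1 < h1.
Proof. unfold hm, h1. apply Rminus_gt_0_lt. field_simplify; [|lra]. apply Rdiv_lt_0_compat; lra. Qed.

Lemma PI2_range : 0 < PI / 2 < 2 * PI.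
Proof. pose proof PI_RGT_0. lra. Qed.

Lemma ea_PI2 : ea r1 (PI / 2) = r1.
Proof. unfold ea. rewrite cos_PI2. field. Qed.

Lemma matching : Tint r0 r1 h1 = eT r0 r1 (PI / 2).
Proof.
  set (sB := PI / 2). pose proof PI2_range as HsB. fold sB in HsB. assert (HsBv : sB = PI / 2) by reflexivity. pose proof PI_RGT_0.
  set (sA := esA r0 r1 sB). set (lb := sA / 2). set (ub := (sB + 2 * PI) / 2).
  pose proof (ell_lbub r0 r1 Hr0 Hr01 sB HsB) as (L1 & L2 & L3 & L4 & L5). fold sA lb ub in L1, L2, L3, L4, L5.
  assert (Hlu : lb < ub) by lra.
  pose proof (ell_HTh r0 r1 Hr0 Hr01 sB HsB) as HTh. fold sA lb ub in HTh.
  pose proof (ell_HP r0 r1 Hr0 Hr01 sB HsB) as HP. fold sA lb ub in HP.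
  set (Th := eTh r0 r1 sB) in *. set (sg := sig_inv Th lb ub).
  set (Tm := eT r0 r1 sB).
  assert (ThA : Th sA = 0) by apply ell_Th_A.
  assert (ThB : Th sB = Tm) by apply ell_Th_B.
  assert (Hlbt : Th lb < 0) by (rewrite <- ThA; apply (Th_incr _ _ lb ub HTh); lra).
  assert (Hubt : Tm < Th ub) by (rewrite <- ThB; apply (Th_incr _ _ lb ub HTh); lra).
  assert (HTm : 0 < Tm) by (rewrite <- ThB, <- ThA; apply (Th_incr _ _ lb ub HTh); lra).
  assert (Hsg : forall t, 0 <= t <= Tm -> sA <= sg t <= sB).
  { intros t Ht. destruct (sig_spec Th _ lb ub Hlu HTh t ltac:(lra)) as [Hr He].
    fold sg in Hr, He. split.
    - destruct (Rle_or_lt sA (sg t)) as [|Hl]; auto.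
      pose proof (Th_incr _ _ lb ub HTh (sg t) sA ltac:(lra) Hl ltac:(lra)). lra.
    - destruct (Rle_or_lt (sg t) sB) as [|Hl]; auto.
      pose proof (Th_incr _ _ lb ub HTh sB (sg t) ltac:(lra) Hl ltac:(lra)). lra. }
  assert (Ha : ea r1 sB = r1) by apply ea_PI2.
  set (F := fun t => Gam r0 h1 (eP r1 sB (sg t)) - t).
  assert (HF : forall t, 0 <= t <= Tm -> derivable_pt_lim F t 0).
  { intros t Ht. pose proof (Hsg t Ht) as Hs.
    destruct (GI_ode Th _ (eP r1 sB) (eW r1 sB) lb ub Hlu HTh HP t ltac:(lra)) as (P1 & P2 & P3).
    fold sg in P1, P2, P3.
    assert (Hu : lb <= sg t <= ub) by lra.
    assert (Hc0 : 0 <= cos (sg t)) by (apply cos_ge_0; lra).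
    assert (HeP : eP r1 sB (sg t) <= r1).
    { unfold eP. rewrite Ha. pose proof (one_minus_cos_pos (sg t) ltac:(lra)). nra. }
    assert (Hdom : 0 < eP r1 sB (sg t) < 4 * r1 / 3) by lra.
    pose proof (Gam_d r0 r1 Hr0 Hr01 h1 _ hm_h1 Hdom) as G.
    pose proof (derivable_pt_lim_comp (fun s => eP r1 sB (sg s)) (Gam r0 h1) t _ _ P2 G) as C.
    unfold comp in C. unfold F. eapply dl_eq. apply dl_minus. exact C. apply derivable_pt_lim_id.
    (* gI h1 (eP) * eW = 1 *)
    pose proof (ell_energy r0 r1 Hr0 Hr01 sB HsB (sg t) Hu) as En. fold sA lb ub in En.
    rewrite Ha in En. fold h1 in En.
    assert (HW : 0 < eW r1 sB (sg t)).
    { unfold eW. apply Rdiv_lt_0_compat. apply sin_gt_0; lra.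
      apply Rmult_lt_0_compat. apply sqrt_lt_R0. rewrite Ha; lra. apply one_minus_cos_pos; lra. }
    unfold gI. replace (2 * (h1 + / eP r1 sB (sg t))) with (eW r1 sB (sg t) * eW r1 sB (sg t)).
    2:{ unfold Rdiv in En. rewrite Rmult_1_l in En. lra. }
    rewrite sqrt_square by lra. field. lra. }
  assert (Heq := const_on F 0 Tm HF Tm ltac:(lra)).
  unfold F in Heq.
  assert (S0 : sg 0 = sA) by (rewrite <- ThA; apply (sig_Th _ _ lb ub Hlu HTh); lra).
  assert (ST : sg Tm = sB) by (rewrite <- ThB; apply (sig_Th _ _ lb ub Hlu HTh); lra).
  rewrite S0, ST in Heq.
  assert (EA : eP r1 sB sA = r0).
  { unfold eP. rewrite <- (ea_start r0 r1 Hr0 Hr01 sB HsB). reflexivity. }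
  assert (EB : eP r1 sB sB = r1).
  { unfold eP. apply (ea_end r1 sB HsB). }
  rewrite EA, EB, Gam_r0 in Heq. unfold Tint. lra.
Qed.
End Core.

Section Big.
Variables r0 r1 : R.
Hypothesis Hr0 : 0 < r0.
Hypothesis Hr01 : r0 < r1.

Lemma ea_cont x : 0 < x < 2 * PI -> continuity_pt (ea r1) x.
Proof.
  intros Hx. unfold ea. apply cp_div. apply cp_const. apply cp_minus. apply cp_const.
  apply continuity_cos. pose proof (one_minus_cos_pos x Hx); lra.
Qed.

Lemma esA_cont x : 0 < x < 2 * PI -> continuity_pt (esA r0 r1) x.
Proof.
  intros Hx. unfold esA. apply (cp_comp (ecA r0 r1) acos).
  - unfold ecA. apply cp_minus. apply cp_const. apply cp_div. apply cp_minus. apply cp_const.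
    apply continuity_cos. apply cp_const. pose proof (eS_gt1 r0 r1 Hr0 Hr01); lra.
  - apply derivable_continuous_pt. apply derivable_pt_acos. apply ecA_range; auto.
Qed.

Lemma eT_cont x : 0 < x < 2 * PI -> continuity_pt (eT r0 r1) x.
Proof.
  intros Hx. pose proof (ea_pos r0 r1 Hr0 Hr01 x Hx) as Ha. unfold eT.
  apply cp_mult. apply cp_mult. apply ea_cont; auto.
  apply (cp_comp (ea r1) sqrt). apply ea_cont; auto. apply continuity_pt_sqrt. lra.
  apply cp_minus. apply cp_minus. apply cp_id. apply continuity_sin.
  apply cp_minus. apply esA_cont; auto. apply (cp_comp (esA r0 r1) sin). apply esA_cont; auto.
  apply continuity_sin.
Qed.

Lemma eT_large M : exists s, PI < s < 2 * PI /\ M < eT r0 r1 s.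
Proof.
  pose proof PI_RGT_0 as HPI.
  set (K := Rmax 1 (2 * M / PI) + 1).
  assert (HK1 : 1 <= Rmax 1 (2 * M / PI)) by apply Rmax_l.
  assert (HK2 : 2 * M / PI <= Rmax 1 (2 * M / PI)) by apply Rmax_r.
  assert (HKp : 0 < K) by (unfold K; lra).
  assert (HK3 : 2 * M / PI < K) by (unfold K; lra).
  assert (HK4 : 1 < K) by (unfold K; lra).
  clearbody K.
  set (eps := Rmin 1 (r1 / K)).
  assert (He : 0 < eps) by (apply Rmin_pos; [lra| apply Rdiv_lt_0_compat; lra]).
  assert (He1 : eps <= 1) by apply Rmin_l.
  assert (He2 : eps <= r1 / K) by apply Rmin_r.
  destruct (continuity_cos (2 * PI) eps He) as [del [Hdel Hc]].
  set (s := 2 * PI - Rmin (del / 2) (PI / 2)).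
  assert (Hm1 : 0 < Rmin (del / 2) (PI / 2)) by (apply Rmin_pos; lra).
  assert (Hm2 : Rmin (del / 2) (PI / 2) <= del / 2) by apply Rmin_l.
  assert (Hm3 : Rmin (del / 2) (PI / 2) <= PI / 2) by apply Rmin_r.
  assert (Hs : PI < s < 2 * PI) by (unfold s; lra).
  exists s. split; auto.
  assert (Hcs : Rabs (cos s - 1) < eps).
  { rewrite <- cos_2PI. apply Hc. split. split; [exact I| unfold s; lra].
    simpl. unfold R_dist, s. rewrite Rabs_left; lra. }
  apply Rabs_def2 in Hcs.
  assert (Hs' : 0 < s < 2 * PI) by lra.
  pose proof (one_minus_cos_pos s Hs') as Hpos.
  assert (Ha : K < ea r1 s).
  { unfold ea. apply (Rmult_lt_reg_r (1 - cos s)); auto.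
    replace (r1 / (1 - cos s) * (1 - cos s)) with r1 by (field; lra).
    assert (K * (1 - cos s) < K * eps) by (apply Rmult_lt_compat_l; lra).
    assert (K * eps <= r1).
    { apply Rle_trans with (K * (r1 / K)). apply Rmult_le_compat_l; lra.
      right; field; lra. }
    lra. }
  assert (Hsa : 1 <= sqrt (ea r1 s)).
  { rewrite <- sqrt_1. apply sqrt_le_1_alt. lra. }
  pose proof (esA_range r0 r1 Hr0 Hr01 s Hs') as HA.
  assert (HcA : 0 <= ecA r0 r1 s).
  { unfold ecA. pose proof (eS_gt1 r0 r1 Hr0 Hr01).
    assert ((1 - cos s) / eS r0 r1 < 1 - cos s) by (apply div_lt_self; lra). lra. }
  assert (HA2 : esA r0 r1 s <= PI / 2).
  { destruct (Rle_or_lt (esA r0 r1 s) (PI / 2)) as [|Hgt]; auto.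
    assert (cos (esA r0 r1 s) < 0) by (apply cos_lt_0; lra).
    rewrite (cos_esA r0 r1 Hr0 Hr01 s Hs') in H. lra. }
  assert (HsinA : 0 <= sin (esA r0 r1 s)) by (apply sin_ge_0; lra).
  assert (Hsins : sin s <= 0) by (apply sin_le_0; lra).
  assert (Hbr : PI / 2 <= (s - sin s) - (esA r0 r1 s - sin (esA r0 r1 s))) by lra.
  unfold eT.
  assert (M < ea r1 s * (PI / 2)).
  { assert (2 * M / PI < ea r1 s) by (lra).
    apply (Rmult_lt_compat_r (PI / 2)) in H; [|lra].
    replace (2 * M / PI * (PI / 2)) with M in H by (field; lra). lra. }
  assert (ea r1 s * (PI / 2) <= ea r1 s * sqrt (ea r1 s) * ((s - sin s) - (esA r0 r1 s - sin (esA r0 r1 s)))).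
  { apply Rmult_le_compat; try lra.
    rewrite <- (Rmult_1_r (ea r1 s)) at 1. apply Rmult_le_compat_l; lra. }
  lra.
Qed.

Lemma core_up T : 0 < T ->
  exists (r w : R -> R) (al be : R), al < 0 /\ T < be /\
   (forall t, al < t < be -> 0 < r t /\ derivable_pt_lim r t (w t) /\
        derivable_pt_lim w t (- / (r t) ^ 2)) /\ r 0 = r0 /\ r T = r1.
Proof.
  intros HT. pose proof PI_RGT_0 as HPI.
  set (Tm := eT r0 r1 (PI / 2)).
  destruct (Rle_or_lt T Tm) as [Hle|Hgt].
  -
    set (c := (r1 - r0) / T).
    assert (Hc : 0 < c) by (unfold c; apply Rdiv_lt_0_compat; lra).
    set (H := c * c).
    assert (HH : 0 < H) by (unfold H; nra).
    assert (Hsmall : Tint r0 r1 H < T).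
    { eapply Rle_lt_trans. apply Tint_small; auto.
      assert (sqrt H = c) by (unfold H; apply sqrt_square; lra).
      assert (sqrt H < sqrt (2 * H)) by (apply sqrt_lt_1_alt; lra).
      apply (Rmult_lt_reg_r (sqrt (2 * H))); [lra|].
      replace ((r1 - r0) / sqrt (2 * H) * sqrt (2 * H)) with (r1 - r0) by (field; lra).
      replace (r1 - r0) with (c * T) by (unfold c; field; lra). nra. }
    assert (Hh1H : h1 r1 < H) by (unfold h1; assert (0 < / (2 * r1)) by (apply Rinv_0_lt_compat; lra); lra).
    assert (Hm : hm r1 < h1 r1) by (apply (hm_h1 r0 r1 Hr0 Hr01)).
    assert (Hex : exists h, hm r1 < h /\ Tint r0 r1 h = T).
    { destruct Hle as [Hlt|Heq].
      - destruct (IVT_interv (fun h => T - Tint r0 r1 h) (h1 r1) H) as [h [Hh Hz]].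
        + intros a Ha. apply cp_minus. apply cp_const. apply (Tint_cont r0 r1 Hr0 Hr01). lra.
        + lra.
        + rewrite (matching r0 r1 Hr0 Hr01). fold Tm. lra.
        + lra.
        + exists h. split; lra.
      - exists (h1 r1). split; auto. rewrite (matching r0 r1 Hr0 Hr01). fold Tm. lra. }
    destruct Hex as [h [Hh Eh]].
    rewrite <- Eh. apply (int_solution r0 r1 Hr0 Hr01 h Hh).
  - destruct (eT_large T) as [sb [Hsb Hsb2]].
    assert (HPI2 : PI / 2 < sb) by lra.
    destruct (IVT_interv (fun s => eT r0 r1 s - T) (PI / 2) sb) as [s [Hs Hz]].
    + intros a Ha. apply cp_minus. apply eT_cont; lra. apply cp_const.
    + lra.
    + fold Tm. lra.
    + lra.
    + replace T with (eT r0 r1 s) by lra.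
      apply (ell_solution r0 r1 Hr0 Hr01 s). lra.
Qed.
End Big.

Lemma reverse_d (f : R -> R) T t l : derivable_pt_lim f (T - t) l ->
  derivable_pt_lim (fun x => f (T - x)) t (- l).
Proof.
  intros H.
  assert (Hid : derivable_pt_lim (fun x => T - x) t (-1)).
  { eapply dl_eq. apply dl_minus; [apply dl_const| apply derivable_pt_lim_id]. ring. }
  pose proof (derivable_pt_lim_comp (fun x => T - x) f t (-1) l Hid H) as Hc.
  unfold comp in Hc. eapply dl_eq; [exact Hc|ring].
Qed.

Lemma radial_exist : RadialExist.
Proof.
  intros r0 r1 T H0 H1 Hne HT.
  destruct (Rlt_or_le r0 r1) as [Hlt|Hge].
  - apply core_up; auto.
  - assert (Hlt : r1 < r0) by lra.
    destruct (core_up r1 r0 H1 Hlt T HT) as (r & w & al & be & Hal & Hbe & Hode & E0 & ET).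
    exists (fun t => r (T - t)), (fun t => - w (T - t)), (T - be), (T - al).
    split; [lra|]. split; [lra|]. split; [|split].
    + intros t Ht. destruct (Hode (T - t) ltac:(lra)) as (P & Q & U).
      split; auto. split.
      * apply reverse_d; auto.
      * eapply dl_eq. apply (derivable_pt_lim_opp (fun x => w (T - x))). apply reverse_d. exact U. ring.
    + rewrite Rminus_0_r. auto.
    + rewrite Rminus_diag. auto.
Qed.

Theorem mainTheorem4 (d : nat) (O A B : pt) :
  (d = 2 \/ d = 3)%nat ->
  inR d O -> inR d A -> inR d B ->
  0 < norm d (vsub A O) -> 0 < norm d (vsub B O) -> 0 < norm d (vsub A B) ->
  (exists s : R, 0 < s /\ forall i, (i < d)%nat -> B i - O i = s * (A i - O i)) ->
  forall T : R, 0 < T ->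
    (exists (q : R -> pt) (tA : R),
        ArcFromTo d O A B q tA T /\ DirectArc d O q tA (tA + T) /\
        Rectilinear d O q tA (tA + T)) /\
    (forall (q1 q2 : R -> pt) (t1 t2 : R),
        ArcFromTo d O A B q1 t1 T -> DirectArc d O q1 t1 (t1 + T) ->
        ArcFromTo d O A B q2 t2 T -> DirectArc d O q2 t2 (t2 + T) ->
        forall s, 0 <= s <= T -> eqpt d (q1 (t1 + s)) (q2 (t2 + s))).
Proof.
  intros Hd HO HA HB HnA HnB HAB Hs T HT. split.
  - apply (existence_part radial_exist); auto.
  - apply (uniqueness_part d O A B T); auto.
Qed.
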